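(* Tile $\mathbb{R}^2$ by the closed unit squares $\{S_k\}_{k\ge 0}$ of the integer-translated grid whose centres are the points of $\mathbb{Z}^2$, with $S_0$ the square centred at the origin. Each square is either occupied or vacant. Let $C(0)$ be the occupied star-connected component containing $S_0$, and suppose $C(0)$ is finite. Let $G_C$ be the graph whose vertices are the corners of the squares of $C(0)$ and whose edges are the sides of the squares of $C(0)$, and let $\partial_0$ be the outermost boundary of $C(0)$, i.e. the set of edges $e$ of $G_C$ such that for every cycle $C$ in $G_C$, either $e$ is an edge of $C$ or $e$ lies in the exterior of $C$. Then $\partial_0$ is (the edge set of) a unique set of cycles $C_1,\dots,C_n$ in $G_C$ with the following properties: (i) the graph $\bigcup_{1\le i\le n} C_i$ is a connected subgraph of $G_C$; (ii) if $i\neq j$, the cycles $C_i$ and $C_j$ have disjoint interiors and share at most one vertex; (iii) every square $S_k\in C(0)$ is contained in the interior of some cycle $C_j$; (iv) if $e\in C_j$ for some $j$, then $e$ is a boundary edge of $C(0)$, adjacent to an occupied square of $C(0)$ lying in the interior of $C_j$ and adjacent to a vacant square lying in the exterior of $C_j$. Moreover, there exists a circuit $C_{out}$ containing every edge of $\bigcup_{1\le i\le n} C_i$.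
   Context: Two squares are star-adjacent (adjacent) if they share a corner, and plus-adjacent if they share an edge. $C(0)$ is empty if $S_0$ is vacant; otherwise it is the set of occupied squares $S$ such that there is a sequence of distinct occupied squares $S_0=Y_1,\dots,Y_t=S$ with $Y_i$ star-adjacent to $Y_{i+1}$ for all $i$. An edge $e$ is adjacent to a square if it is one of the sides of that square; $e$ is a boundary edge if it is adjacent to one vacant and one occupied square. A path is a sequence of distinct vertices with consecutive ones joined by an edge; a cycle is a sequence of distinct vertices $(v_0,\dots,v_m,v_0)$ with consecutive vertices (including $v_m,v_0$) joined by edges; a circuit is a closed sequence of vertices $(w_0,\dots,w_r,w_0)$ with consecutive vertices joined by edges and no edge repeated (vertices may repeat). A cycle divides the plane into two connected regions: the bounded one is its interior, the unbounded one its exterior. *)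

(* Defs.v *)
From Stdlib Require Import ZArith List Relations Arith.
Import ListNotations.
Open Scope Z_scope.

(* Square [c] is the closed unit square centred at [c];
   its corners are the points c + (+-1/2, +-1/2).  We label the corner
   c - (1/2,1/2) by the integer vertex [c], so the corners of square [c]
   are the vertices c, c+(1,0), c+(0,1), c+(1,1). *)
Definition pt := (Z * Z)%type.
Definition origin : pt := (0, 0).

(* An edge (unit side) of the grid: (p, true) joins p and p+(1,0),
   (p, false) joins p and p+(0,1).  Each grid edge has exactly one name. *)
Definition edge := (pt * bool)%type.

Definition ends (e : edge) : pt * pt :=
  match e with
  | (p, true) => (p, (fst p + 1, snd p))
  | (p, false) => (p, (fst p, snd p + 1))
  end.

Definition joins (e : edge) (u v : pt) : Prop :=
  (u = fst (ends e) /\ v = snd (ends e)) \/ (u = snd (ends e) /\ v = fst (ends e)).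

Definition side_of (e : edge) (c : pt) : Prop :=
  match e with
  | (p, true) => p = c \/ p = (fst c, snd c + 1)
  | (p, false) => p = c \/ p = (fst c + 1, snd c)
  end.

Definition corner (v c : pt) : Prop :=
  v = c \/ v = (fst c + 1, snd c) \/ v = (fst c, snd c + 1)
  \/ v = (fst c + 1, snd c + 1).

Definition star_adj (a b : pt) : Prop :=
  a <> b /\ Z.abs (fst a - fst b) <= 1 /\ Z.abs (snd a - snd b) <= 1.

Fixpoint chain {A : Type} (R : A -> A -> Prop) (l : list A) : Prop :=
  match l with
  | x :: ((y :: _) as t) => R x y /\ chain R t
  | _ => True
  end.

(* C(0): squares S reachable from S_0 by a sequence of distinct occupied,
   consecutively star-adjacent squares (empty if S_0 is vacant). *)
Definition C0 (occ : pt -> Prop) (s : pt) : Prop :=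
  exists Y : list pt,
    NoDup (origin :: Y) /\ Forall occ (origin :: Y) /\
    chain star_adj (origin :: Y) /\ last (origin :: Y) origin = s.

Definition finite_set {A : Type} (P : A -> Prop) : Prop :=
  exists l : list A, forall x, P x -> In x l.

Definition GC_vertex (occ : pt -> Prop) (v : pt) : Prop :=
  exists c, C0 occ c /\ corner v c.
Definition GC_edge (occ : pt -> Prop) (e : edge) : Prop :=
  exists c, C0 occ c /\ side_of e c.

Definition boundary_edge (occ : pt -> Prop) (e : edge) : Prop :=
  exists c1 c2, side_of e c1 /\ side_of e c2 /\ occ c1 /\ ~ occ c2.

Definition nxt (n i : nat) : nat := Nat.modulo (S i) n.

(* A cycle (v_0,...,v_m,v_0) of G_C, given as the list [v_0;...;v_m] of
   distinct vertices, m >= 2, consecutive ones (cyclically) joined by an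
   edge of G_C. *)
Definition is_cycle (occ : pt -> Prop) (C : list pt) : Prop :=
  (3 <= length C)%nat /\ NoDup C /\
  forall i, (i < length C)%nat ->
    exists e, GC_edge occ e /\
      joins e (nth i C origin) (nth (nxt (length C) i) C origin).

Definition cycle_edge (C : list pt) (e : edge) : Prop :=
  exists i, (i < length C)%nat /\
    joins e (nth i C origin) (nth (nxt (length C) i) C origin).

(* ---- Interior / exterior of a cycle ----
   The plane is decomposed into the cells of the grid: open unit squares,
   open unit edges and vertices.  A cycle is a union of closed edges, so its
   complement is the union of the cells not lying on it, and two such cells
   lie in the same connected component of the complement iff they are
   joined by a chain of incident cells off the cycle.  The interior is the
   bounded component (made of finitely many cells), the exterior the
   unbounded one. *)
Inductive cell : Type :=
| Sq : pt -> cell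
| Ed : edge -> cell
| Vx : pt -> cell.

Definition incident (x y : cell) : Prop :=
  match x, y with
  | Sq c, Ed e => side_of e c
  | Ed e, Sq c => side_of e c
  | Ed e, Vx v => v = fst (ends e) \/ v = snd (ends e)
  | Vx v, Ed e => v = fst (ends e) \/ v = snd (ends e)
  | _, _ => False
  end.

Definition off_cycle (C : list pt) (x : cell) : Prop :=
  match x with
  | Sq _ => True
  | Ed e => ~ cycle_edge C e
  | Vx v => ~ In v C
  end.

Definition same_component (C : list pt) : cell -> cell -> Prop :=
  clos_refl_trans cell
    (fun x y => off_cycle C x /\ off_cycle C y /\ incident x y).

Definition in_interior (C : list pt) (x : cell) : Prop :=
  off_cycle C x /\ finite_set (same_component C x).

Definition in_exterior (C : list pt) (x : cell) : Prop :=
  off_cycle C x /\ ~ finite_set (same_component C x).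

Definition outer_boundary (occ : pt -> Prop) (e : edge) : Prop :=
  GC_edge occ e /\
  forall C, is_cycle occ C -> cycle_edge C e \/ in_exterior C (Ed e).

Definition union_edge (Cs : list (list pt)) (e : edge) : Prop :=
  exists C, In C Cs /\ cycle_edge C e.
Definition union_vertex (Cs : list (list pt)) (v : pt) : Prop :=
  exists C, In C Cs /\ In v C.

Definition union_connected (Cs : list (list pt)) : Prop :=
  forall u v, union_vertex Cs u -> union_vertex Cs v ->
    exists ws : list pt, NoDup (u :: ws) /\
      chain (fun a b => exists e, union_edge Cs e /\ joins e a b) (u :: ws) /\
      last (u :: ws) u = v.

Definition good_family (occ : pt -> Prop) (Cs : list (list pt)) : Prop :=
  (forall C, In C Cs -> is_cycle occ C) /\
  (forall e, union_edge Cs e <-> outer_boundary occ e) /\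
  union_connected Cs /\
  (forall i j, (i < length Cs)%nat -> (j < length Cs)%nat -> i <> j ->
     (forall x, ~ (in_interior (nth i Cs []) x /\ in_interior (nth j Cs []) x)) /\
     (forall u v, In u (nth i Cs []) -> In u (nth j Cs []) ->
                  In v (nth i Cs []) -> In v (nth j Cs []) -> u = v)) /\
  (forall k, C0 occ k -> exists C, In C Cs /\ in_interior C (Sq k)) /\
  (forall C e, In C Cs -> cycle_edge C e ->
     boundary_edge occ e /\
     (exists c, side_of e c /\ C0 occ c /\ in_interior C (Sq c)) /\
     (exists c, side_of e c /\ ~ occ c /\ in_exterior C (Sq c))).

(* two families determine the same set of cycles (cycles identified with
   their edge sets, i.e. as subgraphs) *)
Definition same_cycle (C C' : list pt) : Prop :=
  forall e, cycle_edge C e <-> cycle_edge C' e.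
Definition same_family (Cs Cs' : list (list pt)) : Prop :=
  (forall C, In C Cs -> exists C', In C' Cs' /\ same_cycle C C') /\
  (forall C', In C' Cs' -> exists C, In C Cs /\ same_cycle C C').

(* A circuit (w_0,...,w_r,w_0) in G_C: ws = [w_0;...;w_r], es the list of the
   traversed edges, es_i joining w_i and w_{i+1} (cyclically), no edge
   repeated. *)
Definition is_circuit (occ : pt -> Prop) (ws : list pt) (es : list edge) : Prop :=
  ws <> [] /\ length es = length ws /\ NoDup es /\
  forall i, (i < length ws)%nat ->
    GC_edge occ (nth i es (origin, true)) /\
    joins (nth i es (origin, true)) (nth i ws origin)
          (nth (nxt (length ws) i) ws origin).

(* Main.v *)
Require Import Defs.
From Stdlib Require Import ZArith List Relations Arith Lia Bool Permutation.
From Stdlib Require Import Classical ClassicalEpsilon.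
Import ListNotations.
Open Scope Z_scope.

Definition dec (P : Prop) : bool := if excluded_middle_informative P then true else false.
Lemma decP (P:Prop) : dec P = true <-> P.
Proof. unfold dec; destruct (excluded_middle_informative P); split; intuition congruence. Qed.
Lemma decF (P:Prop) : dec P = false <-> ~P.
Proof. unfold dec; destruct (excluded_middle_informative P); split; intuition congruence. Qed.

Ltac zcase := repeat (first [ match goal with |- context [Z.eqb ?a ?b] => destruct (Z.eqb_spec a b); simpl end
                            | match goal with |- context [Z.ltb ?a ?b] => destruct (Z.ltb_spec a b); simpl end ]).

Definition pteqb (a b : pt) : bool := Z.eqb (fst a) (fst b) && Z.eqb (snd a) (snd b).
Lemma pteqb_spec a b : reflect (a = b) (pteqb a b).
Proof. destruct a as [a1 a2], b as [b1 b2]; unfold pteqb; simpl.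
  destruct (Z.eqb_spec a1 b1), (Z.eqb_spec a2 b2); simpl; constructor; try congruence; subst; auto. Qed.

Definition joinsb (e : edge) (u v : pt) : bool :=
  (pteqb u (fst (ends e)) && pteqb v (snd (ends e))) || (pteqb u (snd (ends e)) && pteqb v (fst (ends e))).
Lemma joinsb_spec e u v : reflect (joins e u v) (joinsb e u v).
Proof. unfold joinsb, joins.
  destruct (pteqb_spec u (fst (ends e))), (pteqb_spec v (snd (ends e))),
           (pteqb_spec u (snd (ends e))), (pteqb_spec v (fst (ends e))); simpl; constructor; tauto. Qed.

Ltac pinj := repeat match goal with H : (_,_) = (_,_) |- _ => injection H; clear H; intros end.

Lemma joins_uniq e e' u v : joins e u v -> joins e' u v -> e = e'.
Proof.
  destruct e as [[a b] o], e' as [[a' b'] o']; unfold joins; simpl;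
  destruct o, o'; simpl; intros H1 H2; destruct H1 as [[? ?]|[? ?]], H2 as [[? ?]|[? ?]]; subst; pinj;
  first [ f_equal; f_equal; lia | exfalso; lia ].
Qed.

Definition adj (u v : pt) : Prop := exists e, joins e u v.

Fixpoint sumN (f : nat -> Z) (n : nat) : Z := match n with O => 0 | S k => sumN f k + f k end.
Lemma sumN_ext f g n : (forall t, (t < n)%nat -> f t = g t) -> sumN f n = sumN g n.
Proof. induction n; simpl; intros; auto. rewrite IHn, H; auto. Qed.
Lemma sumN_add f g n : sumN (fun t => f t + g t) n = sumN f n + sumN g n.
Proof. induction n; simpl; lia. Qed.
Lemma sumN_sub f g n : sumN (fun t => f t - g t) n = sumN f n - sumN g n.
Proof. induction n; simpl; lia. Qed.
Lemma sumN_even f n : (forall t, (t < n)%nat -> Z.even (f t) = true) -> Z.even (sumN f n) = true.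
Proof. induction n; simpl; intros; auto. rewrite Z.even_add, IHn, H; auto. Qed.
Lemma sumN_shift f n : sumN (fun t => f (S t)) n = sumN f n + f n - f O.
Proof. induction n; simpl; lia. Qed.
Lemma sumN_zero f n : (forall t, (t < n)%nat -> f t = 0) -> sumN f n = 0.
Proof. induction n; simpl; intros; auto. rewrite IHn, H; auto. Qed.

Definition cnt (g : nat -> pt) (L : nat) (p : pt -> pt -> bool) : Z :=
  sumN (fun t => if p (g t) (g (S t)) then 1 else 0) L.
Definition vcr (s : pt) (u w : pt) : bool :=
  Z.eqb (fst u) (fst w) && Z.ltb (fst s) (fst u) &&
  ((Z.eqb (snd u) (snd s) && Z.eqb (snd w) (snd s + 1)) || (Z.eqb (snd w) (snd s) && Z.eqb (snd u) (snd s + 1))).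
Definition par g L s := Z.odd (cnt g L (vcr s)).
Definition ec g L e := cnt g L (joinsb e).
Definition gwalk (g : nat -> pt) (L : nat) := forall t, (t < L)%nat -> adj (g t) (g (S t)).
Definition closedw (g : nat -> pt) (L : nat) := g L = g O.

Lemma ph_point x y u w :
  (if vcr (x,y) u w then 1 else 0) = (if vcr (x+1,y) u w then 1 else 0) + (if joinsb ((x+1,y),false) u w then 1 else 0).
Proof. destruct u as [a b], w as [c d]; unfold vcr, joinsb, pteqb; simpl; zcase; lia. Qed.

Lemma par_h g L x y x' : x' = x + 1 ->
  par g L (x,y) = xorb (par g L (x',y)) (Z.odd (ec g L ((x',y),false))).
Proof. intros ->; unfold par, ec, cnt. rewrite <- Z.odd_add, <- sumN_add.
  f_equal. apply sumN_ext; intros; apply ph_point. Qed.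

Lemma pv_point x y u w : adj u w ->
  Z.even ((if (Z.eqb (snd u) (y+1) && Z.ltb x (fst u)) then 1 else 0) +
          (if (Z.eqb (snd w) (y+1) && Z.ltb x (fst w)) then 1 else 0) -
          (if vcr (x,y) u w then 1 else 0) - (if vcr (x,y+1) u w then 1 else 0) -
          (if joinsb ((x,y+1),true) u w then 1 else 0)) = true.
Proof. intros [e He]. destruct e as [[a b] o]; destruct o; unfold joins in He; simpl in He;
  destruct He as [[-> ->]|[-> ->]]; unfold vcr, joinsb, pteqb; simpl; zcase; try reflexivity; lia. Qed.

Lemma par_v g L x y y' : gwalk g L -> closedw g L -> y' = y + 1 ->
  par g L (x,y) = xorb (par g L (x,y')) (Z.odd (ec g L ((x,y'),true))).
Proof. intros Hw Hc ->. unfold par, ec, cnt.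
  set (h := fun p : pt => if (Z.eqb (snd p) (y+1) && Z.ltb x (fst p)) then 1 else 0).
  assert (E: Z.even (sumN (fun t => h (g t) + h (g (S t)) -
          (if vcr (x,y) (g t) (g (S t)) then 1 else 0) - (if vcr (x,y+1) (g t) (g (S t)) then 1 else 0) -
          (if joinsb ((x,y+1),true) (g t) (g (S t)) then 1 else 0)) L) = true).
  { apply sumN_even; intros; apply pv_point; auto. }
  rewrite !sumN_sub, sumN_add in E.
  rewrite (sumN_shift (fun t => h (g t))) in E. unfold closedw in Hc; rewrite Hc in E.
  set (A := sumN (fun t => if vcr (x, y) (g t) (g (S t)) then 1 else 0) L) in *.
  set (B := sumN (fun t => if vcr (x, y+1) (g t) (g (S t)) then 1 else 0) L) in *.
  set (C := sumN (fun t => if joinsb ((x, y+1),true) (g t) (g (S t)) then 1 else 0) L) in *.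
  set (H := sumN (fun t => h (g t)) L) in *.
  replace (H + (H + h (g 0%nat) - h (g 0%nat)) - A - B - C) with (2*H - (A + B + C)) in E by lia.
  rewrite Z.even_sub, Z.even_mul in E. simpl in E.
  rewrite <- !Z.odd_add. rewrite <- Z.negb_even. 
  destruct (Z.even (A+B+C)) eqn:Q; simpl in E; try discriminate.
  replace (A + B + C) with (A + (B + C)) in Q by lia. 
  rewrite Z.even_add in Q. rewrite <- !Z.negb_odd in Q. rewrite Z.odd_add.
  rewrite <- Z.negb_odd, Z.odd_add in *. destruct (Z.odd A), (Z.odd B), (Z.odd C); simpl in *; auto; discriminate.
Qed.


Inductive dir := DE | DN | DW | DS.
Definition dir_eqb (a b : dir) : bool :=
  match a, b with DE,DE | DN,DN | DW,DW | DS,DS => true | _,_ => false end.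
Lemma dir_eqb_spec a b : reflect (a = b) (dir_eqb a b).
Proof. destruct a, b; simpl; constructor; congruence. Qed.
Definition dx d := match d with DE => 1 | DW => -1 | _ => 0 end.
Definition dy d := match d with DN => 1 | DS => -1 | _ => 0 end.
Definition opp d := match d with DE => DW | DW => DE | DN => DS | DS => DN end.
Definition rotL d := match d with DE => DN | DN => DW | DW => DS | DS => DE end.
Definition rotR d := match d with DE => DS | DS => DW | DW => DN | DN => DE end.

Definition dart := (pt * dir)%type.
Definition src (d : dart) : pt := fst d.
Definition tgt (d : dart) : pt := (fst (fst d) + dx (snd d), snd (fst d) + dy (snd d)).
Definition lsq (d : dart) : pt :=
  match snd d with DE => fst d | DN => (fst (fst d) - 1, snd (fst d))
  | DW => (fst (fst d) - 1, snd (fst d) - 1) | DS => (fst (fst d), snd (fst d) - 1) end.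
Definition rsq (d : dart) : pt :=
  match snd d with DE => (fst (fst d), snd (fst d) - 1) | DN => fst d
  | DW => (fst (fst d) - 1, snd (fst d)) | DS => (fst (fst d) - 1, snd (fst d) - 1) end.
Definition ed (d : dart) : edge :=
  match snd d with DE => (fst d, true) | DN => (fst d, false)
  | DW => ((fst (fst d) - 1, snd (fst d)), true) | DS => ((fst (fst d), snd (fst d) - 1), false) end.
Definition drev (d : dart) : dart := (tgt d, opp (snd d)).

Ltac dcase d := let x := fresh "x" in let y := fresh "y" in let o := fresh "o" in
  destruct d as [[x y] o]; destruct o; unfold drev, src, tgt, lsq, rsq, ed in *; simpl in *.

Lemma ed_joins d : joins (ed d) (src d) (tgt d).
Proof. dcase d; unfold joins; simpl; first [left; split; f_equal; lia | right; split; f_equal; lia]. Qed.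
Lemma side_lsq d : side_of (ed d) (lsq d).
Proof. dcase d; simpl; first [left; f_equal; lia | right; f_equal; lia]. Qed.
Lemma side_rsq d : side_of (ed d) (rsq d).
Proof. dcase d; simpl; first [left; f_equal; lia | right; f_equal; lia]. Qed.
Lemma lsq_rev d : lsq (drev d) = rsq d.
Proof. dcase d; f_equal; lia. Qed.
Lemma rsq_rev d : rsq (drev d) = lsq d.
Proof. dcase d; f_equal; lia. Qed.
Lemma ed_rev d : ed (drev d) = ed d.
Proof. dcase d; repeat f_equal; lia. Qed.
Lemma rev_rev d : drev (drev d) = d.
Proof. dcase d; repeat f_equal; lia. Qed.
Lemma src_rev d : src (drev d) = tgt d.
Proof. reflexivity. Qed.
Lemma tgt_rev d : tgt (drev d) = src d.
Proof. dcase d; f_equal; lia. Qed.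
Lemma src_tgt_neq d : src d <> tgt d.
Proof. dcase d; intro H; pinj; lia. Qed.
Lemma dart_ends d d' : src d = src d' -> tgt d = tgt d' -> d = d'.
Proof. destruct d as [[x y] o], d' as [[x' y'] o']; unfold src, tgt; simpl; intros H1 H2; pinj; subst.
  destruct o, o'; simpl in *; try reflexivity; exfalso; lia. Qed.
Lemma ed_eq d d' : ed d = ed d' -> d = d' \/ d = drev d'.
Proof. destruct d as [[x y] o], d' as [[x' y'] o']; unfold ed, drev, tgt; simpl; intros H; pinj.
  destruct o, o'; simpl in *; pinj; intros; subst; try discriminate;
  first [left; repeat f_equal; lia | right; repeat f_equal; lia]. Qed.
Lemma joins_dart e d : joins e (src d) (tgt d) -> e = ed d.
Proof. intro H; apply (joins_uniq e (ed d) (src d) (tgt d)); auto using ed_joins. Qed.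
Lemma joinsb_dart e d : joinsb e (src d) (tgt d) = true <-> e = ed d.
Proof. split; intro H. apply joins_dart; apply (reflect_iff _ _ (joinsb_spec _ _ _)); auto.
  subst; apply (reflect_iff _ _ (joinsb_spec _ _ _)); apply ed_joins. Qed.
Lemma adj_dart u v : adj u v -> exists d, src d = u /\ tgt d = v.
Proof. intros [[[a b] o] H]. unfold joins in H; destruct o; simpl in H; destruct H as [[-> ->]|[-> ->]].
  - exists ((a,b),DE); unfold src, tgt; simpl; split; f_equal; lia.
  - exists ((a+1,b),DW); unfold src, tgt; simpl; split; f_equal; lia.
  - exists ((a,b),DN); unfold src, tgt; simpl; split; f_equal; lia.
  - exists ((a,b+1),DS); unfold src, tgt; simpl; split; f_equal; lia. Qed.
Lemma dart_adj d : adj (src d) (tgt d).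
Proof. exists (ed d); apply ed_joins. Qed.
Lemma tgt_in d w : tgt d = w -> d = drev (w, opp (snd d)).
Proof. intro H; subst. destruct d as [[x y] o]; destruct o; unfold drev, tgt; simpl; repeat f_equal; lia. Qed.
Lemma side_ed d c : side_of (ed d) c -> c = lsq d \/ c = rsq d.
Proof. destruct c as [a b]; dcase d; intros [H|H]; pinj; intros;
  first [left; f_equal; lia | right; f_equal; lia]. Qed.
Lemma lsq_rsq_star d : star_adj (lsq d) (rsq d).
Proof. dcase d; unfold star_adj; simpl; repeat split; try (intro H; pinj; lia); lia. Qed.
Lemma edge_dart e : exists d, ed d = e.
Proof. destruct e as [p [|]]; [exists (p,DE) | exists (p,DN)]; reflexivity. Qed.

Inductive stt := SC | SO | SX.
Definition stt_eqb (a b : stt) := match a, b with SC,SC|SO,SO|SX,SX => true | _,_ => false end.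
Definition loc := (stt * stt * stt * stt)%type. (* NE NW SW SE *)
Definition out_sq (l : loc) (d : dir) : stt * stt :=
  match l with (ne,nw,sw,se) =>
  match d with DE => (ne,se) | DN => (nw,ne) | DW => (sw,nw) | DS => (se,sw) end end.
Definition isD (p : stt * stt) := match p with (SC,SO) => true | _ => false end.
Definition outD l d := isD (out_sq l d).
Definition inDl l d := isD (let (a,b) := out_sq l (opp d) in (b,a)).
Definition succl l d := if outD l (rotL d) then rotL d else if outD l d then d else rotR d.
Definition bdl l d := let (a,b) := out_sq l d in isD (a,b) || isD (b,a).
Definition okp a b := negb ((stt_eqb a SX && stt_eqb b SO) || (stt_eqb a SO && stt_eqb b SX)).
Definition validl (l : loc) := match l with (ne,nw,sw,se) => okp ne nw && okp nw sw && okp sw se && okp se ne end.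
Definition pars (pNE : bool) (fl : dir -> bool) : bool * bool * bool * bool :=
  let pNW := xorb pNE (fl DN) in let pSW := xorb pNW (fl DW) in let pSE := xorb pSW (fl DS) in (pNE,pNW,pSW,pSE).
Definition consis (pNE : bool) (fl : dir -> bool) :=
  match pars pNE fl with (pNE,pNW,pSW,pSE) => Bool.eqb (xorb pSE pNE) (fl DE) end.
Definition sook1 (s : stt) (p : bool) := negb (stt_eqb s SO && p).
Definition sook (l : loc) (pNE : bool) (fl : dir -> bool) :=
  match l, pars pNE fl with (ne,nw,sw,se), (a,b,c,d) => sook1 ne a && sook1 nw b && sook1 sw c && sook1 se d end.

Definition all_stt := [SC; SO; SX].
Definition all_dir := [DE; DN; DW; DS].
Definition all_loc : list loc :=
  flat_map (fun a => flat_map (fun b => flat_map (fun c => map (fun d => (a,b,c,d)) all_stt) all_stt) all_stt) all_stt.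
Definition all_bool := [true; false].

Definition chk1 := forallb (fun l => forallb (fun d => negb (validl l && inDl l d) || outD l (succl l d)) all_dir) all_loc.
Definition chk2 := forallb (fun l => forallb (fun d1 => forallb (fun d2 =>
   negb (validl l && inDl l d1 && inDl l d2 && dir_eqb (succl l d1) (succl l d2)) || dir_eqb d1 d2) all_dir) all_dir) all_loc.
Definition flU (a b : dir) (dd : dir) := xorb (dir_eqb dd (opp a)) (dir_eqb dd b).
Definition chkU := forallb (fun l => forallb (fun a => forallb (fun b => forallb (fun p =>
   negb (validl l && inDl l a && bdl l b && negb (dir_eqb b (opp a)) && consis p (flU a b) && sook l p (flU a b))
   || dir_eqb b (succl l a)) all_bool) all_dir) all_dir) all_loc.
Definition chkP := forallb (fun l => forallb (fun d1 => forallb (fun d2 => forallb (fun p =>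
   let fl := fun dd => xorb (dir_eqb dd (opp d2)) (dir_eqb dd (succl l d1)) in
   negb (validl l && inDl l d1 && inDl l d2 && negb (dir_eqb d1 d2) && consis p fl && sook l p fl))
   all_bool) all_dir) all_dir) all_loc.
Lemma chk1_ok : chk1 = true. Proof. vm_compute. reflexivity. Qed.
Lemma chk2_ok : chk2 = true. Proof. vm_compute. reflexivity. Qed.
Lemma chkU_ok : chkU = true. Proof. vm_compute. reflexivity. Qed.
Lemma chkP_ok : chkP = true. Proof. vm_compute. reflexivity. Qed.

Lemma L1 l d : validl l && inDl l d = true -> outD l (succl l d) = true.
Proof. destruct l as [[[a b] c] e]; destruct a, b, c, e, d; vm_compute; intro H; first [reflexivity | discriminate]. Qed.
Lemma L2 l d1 d2 : validl l && inDl l d1 && inDl l d2 = true -> succl l d1 = succl l d2 -> d1 = d2.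
Proof. destruct l as [[[a b] c] e]; destruct a, b, c, e, d1, d2; vm_compute; intros H1 H2;
  first [reflexivity | discriminate]. Qed.
Lemma LU l a b p : validl l && inDl l a && bdl l b && negb (dir_eqb b (opp a)) && consis p (flU a b) && sook l p (flU a b) = true -> b = succl l a.
Proof. destruct l as [[[a1 b1] c1] e1]; destruct a1, b1, c1, e1, a, b, p; vm_compute; intros H1;
  first [reflexivity | discriminate]. Qed.
Lemma LP l d1 d2 p :
   let fl := fun dd => xorb (dir_eqb dd (opp d2)) (dir_eqb dd (succl l d1)) in
   validl l && inDl l d1 && inDl l d2 && negb (dir_eqb d1 d2) && consis p fl && sook l p fl = false.
Proof. destruct l as [[[a1 b1] c1] e1]; destruct a1, b1, c1, e1, d1, d2, p; vm_compute; reflexivity. Qed.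


Lemma chain_app_l {A} (R : A -> A -> Prop) l1 l2 : chain R (l1 ++ l2) -> chain R l1.
Proof. induction l1 as [|x l1 IH]; simpl; auto. destruct l1 as [|y l1]; simpl; auto.
  intros [H1 H2]; split; [exact H1| apply IH; exact H2]. Qed.
Lemma chain_cons_inv {A} (R : A -> A -> Prop) x l : chain R (x :: l) -> chain R l.
Proof. destruct l; simpl; tauto. Qed.
Lemma chain_app {A} (R : A -> A -> Prop) l1 y l2 :
  chain R (l1 ++ y :: l2) <-> chain R (l1 ++ [y]) /\ chain R (y :: l2).
Proof. induction l1 as [|x l1 IH]; simpl. { split; [intros H; split; auto | tauto]. }
  destruct l1 as [|z l1]; simpl in *. { tauto. }
  rewrite IH; tauto. Qed.
Lemma last_irr {A} (a : A) l x z : last (a :: l) x = last (a :: l) z.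
Proof. revert a; induction l as [|b l IH]; intros a; [reflexivity|].
  change (last (b :: l) x = last (b :: l) z); apply IH. Qed.
Lemma chain_snoc {A} (R : A -> A -> Prop) l x y : chain R (x :: l) -> R (last (x :: l) x) y -> chain R (x :: l ++ [y]).
Proof. revert x; induction l as [|z l IH]; intros x H1 H2. simpl in *; auto.
  change (R x z /\ chain R (z :: l ++ [y])). destruct H1 as [H1 H3]. split; [exact H1|].
  apply IH; [exact H3|]. change (R (last (z :: l) x) y) in H2. rewrite (last_irr z l z x); auto. Qed.
Lemma chain_nth {A} (R : A -> A -> Prop) l d : chain R l -> forall i, (S i < length l)%nat -> R (nth i l d) (nth (S i) l d).
Proof. induction l as [|x l IH]; simpl; intros H i Hi; [lia|]. destruct l as [|y l]; simpl in *; [lia|].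
  destruct i; [tauto|]. apply (IH (proj2 H) i); simpl; lia. Qed.
Lemma last_app_single {A} (l : list A) x y : last (l ++ [y]) x = y.
Proof. induction l as [|a l IH]; [reflexivity|]. destruct l as [|b l]; [reflexivity|].
  change (last ((b :: l) ++ [y]) x = y); exact IH. Qed.

Lemma last_in {A} (l : list A) x : In (last (x :: l) x) (x :: l).
Proof. revert x; induction l as [|a l IH]; intros x; [left; reflexivity|].
  change (In (last (a :: l) x) (x :: a :: l)). rewrite (last_irr a l x a). right; apply IH. Qed.

Section Main.
Variable occ : pt -> Prop.
Hypothesis Horig : occ origin.
Hypothesis Hfin : finite_set (C0 occ).

Definition Lc : list pt := proj1_sig (constructive_indefinite_description _ Hfin).
Lemma Lc_spec s : C0 occ s -> In s Lc.
Proof. unfold Lc; destruct (constructive_indefinite_description _ Hfin); simpl; auto. Qed.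
Definition M : Z := fold_right (fun p m => Z.max m (Z.max (Z.abs (fst p)) (Z.abs (snd p)))) 0 Lc.
Lemma M_bound_l l p : In p l -> Z.abs (fst p) <= fold_right (fun p m => Z.max m (Z.max (Z.abs (fst p)) (Z.abs (snd p)))) 0 l /\
   Z.abs (snd p) <= fold_right (fun p m => Z.max m (Z.max (Z.abs (fst p)) (Z.abs (snd p)))) 0 l.
Proof. induction l; simpl; intros H; [contradiction|]. destruct H; subst; [lia|]. specialize (IHl H); lia. Qed.
Lemma M_nonneg : 0 <= M.
Proof. unfold M; induction Lc; simpl; lia. Qed.
Lemma C0_bound s : C0 occ s -> Z.abs (fst s) <= M /\ Z.abs (snd s) <= M.
Proof. intro H; apply M_bound_l, Lc_spec, H. Qed.

Lemma C0_origin : C0 occ origin.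
Proof. exists []; repeat split; simpl; auto. constructor; [simpl; tauto | constructor]. Qed.

Lemma C0_path_elem Y s : NoDup (origin :: Y) -> Forall occ (origin :: Y) -> chain star_adj (origin :: Y) ->
   In s (origin :: Y) -> C0 occ s.
Proof. intros H1 H2 H3 H4. apply in_split in H4. destruct H4 as [l1 [l2 E]].
  destruct l1 as [|a l1].
  - simpl in E; injection E; intros; subst. apply C0_origin.
  - simpl in E; injection E; intros E1 E2; subst a.
    exists (l1 ++ [s]). rewrite E1 in *. repeat split.
    + rewrite app_comm_cons in H1. rewrite app_comm_cons. apply NoDup_app_remove_r with (l' := l2).
      rewrite <- app_assoc; simpl; auto.
    + rewrite Forall_forall in *; intros x Hx; apply H2. rewrite app_comm_cons in Hx |- *.
      apply in_app_or in Hx; apply in_or_app; destruct Hx; auto. simpl in H; destruct H; [|contradiction]; subst; right; left; auto.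
    + rewrite app_comm_cons in H3 |- *. apply (chain_app _ _ s l2) in H3; tauto.
    + rewrite app_comm_cons; apply last_app_single.
Qed.

Lemma C0_occ s : C0 occ s -> occ s.
Proof. intros [Y [H1 [H2 [H3 H4]]]]. rewrite Forall_forall in H2; apply H2. subst s.
  apply last_in. Qed.

Lemma C0_star a b : C0 occ a -> occ b -> star_adj a b -> C0 occ b.
Proof. intros [Y [H1 [H2 [H3 H4]]]] Hb Hab.
  destruct (classic (In b (origin :: Y))) as [Hin|Hin]. { eapply C0_path_elem; eauto. }
  exists (Y ++ [b]). repeat split.
  - rewrite app_comm_cons. apply NoDup_app; auto. constructor; auto; constructor.
    intros x Hx Hx'. simpl in Hx'; destruct Hx'; [subst; contradiction|auto].
  - rewrite app_comm_cons; apply Forall_app; split; auto.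
  - rewrite app_comm_cons. destruct Y as [|y Y]; simpl in *; [split; auto; subst; auto|].
    apply (chain_snoc _ (y :: Y) origin b) in H3; [simpl; auto|]. subst a. auto.
  - rewrite app_comm_cons; apply last_app_single.
Qed.

(* ---------- OV: vacant squares connected to infinity ---------- *)
Definition padj (s t : pt) : Prop :=
  (fst t = fst s + 1 /\ snd t = snd s) \/ (fst t = fst s - 1 /\ snd t = snd s) \/
  (fst t = fst s /\ snd t = snd s + 1) \/ (fst t = fst s /\ snd t = snd s - 1).
Lemma padj_sym s t : padj s t -> padj t s.
Proof. unfold padj; lia. Qed.
Definition base : pt := (M + 1, 0).
Inductive OV : pt -> Prop :=
| OVb : OV base
| OVs s t : ~ C0 occ s -> padj s t -> OV t -> OV s.
Lemma base_nC0 : ~ C0 occ base.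
Proof. intro H; apply C0_bound in H; unfold base in H; simpl in H; lia. Qed.
Lemma OV_nC0 s : OV s -> ~ C0 occ s.
Proof. destruct 1; auto using base_nC0. Qed.
Lemma far_nC0 s : M < fst s -> ~ C0 occ s.
Proof. intros H1 H2; apply C0_bound in H2; lia. Qed.
Lemma OV_far s : M < fst s -> OV s.
Proof. intro H. destruct s as [x y]; simpl in H.
  assert (A : forall n : nat, OV (M + 1 + Z.of_nat n, 0)).
  { induction n. - replace (M + 1 + Z.of_nat 0) with (M+1) by lia; constructor.
    - apply (OVs _ (M + 1 + Z.of_nat n, 0)); auto. apply far_nC0; simpl; lia. unfold padj; simpl; lia. }
  assert (B : forall n : nat, forall y, Z.abs y = Z.of_nat n -> OV (x, y)).
  { induction n; intros y' Hy.
    - replace y' with 0 by lia. replace x with (M + 1 + Z.of_nat (Z.to_nat (x - M - 1))) by lia; apply A.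
    - destruct (Z_lt_le_dec y' 0).
      + apply (OVs _ (x, y' + 1)); [apply far_nC0; simpl; lia | unfold padj; simpl; lia | apply IHn; lia].
      + apply (OVs _ (x, y' - 1)); [apply far_nC0; simpl; lia | unfold padj; simpl; lia | apply IHn; lia]. }
  apply (B (Z.to_nat (Z.abs y))); lia. Qed.

Definition st (s : pt) : stt := if dec (C0 occ s) then SC else if dec (OV s) then SO else SX.
Lemma st_SC s : st s = SC <-> C0 occ s.
Proof. unfold st. destruct (dec (C0 occ s)) eqn:E1; [rewrite decP in E1|rewrite decF in E1].
  - split; auto.
  - destruct (dec (OV s)); split; intros; try discriminate; contradiction. Qed.
Lemma st_SO s : st s = SO <-> OV s.
Proof. unfold st. destruct (dec (C0 occ s)) eqn:E1; [rewrite decP in E1|rewrite decF in E1].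
  - split; intros H; try discriminate. apply OV_nC0 in H; contradiction.
  - destruct (dec (OV s)) eqn:E2; [rewrite decP in E2|rewrite decF in E2]; split; intros; auto; try discriminate; contradiction. Qed.
Lemma okp_st s t : padj s t -> okp (st s) (st t) = true.
Proof. intro H. unfold okp.
  destruct (st s) eqn:E1, (st t) eqn:E2; simpl; auto; exfalso.
  - apply st_SO in E1. assert (~ OV t) by (intro Q; apply st_SO in Q; congruence).
    assert (~ C0 occ t) by (intro Q; apply st_SC in Q; congruence).
    apply H0; apply (OVs _ s); auto. apply padj_sym; auto.
  - apply st_SO in E2. assert (~ OV s) by (intro Q; apply st_SO in Q; congruence).
    assert (~ C0 occ s) by (intro Q; apply st_SC in Q; congruence).
    apply H0; apply (OVs _ t); auto.
Qed.

Definition sNE (w : pt) : pt := w.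
Definition sNW (w : pt) : pt := (fst w - 1, snd w).
Definition sSW (w : pt) : pt := (fst w - 1, snd w - 1).
Definition sSE (w : pt) : pt := (fst w, snd w - 1).
Definition locw (w : pt) : loc := (st (sNE w), st (sNW w), st (sSW w), st (sSE w)).
Lemma validw w : validl (locw w) = true.
Proof. unfold validl, locw. rewrite !okp_st; auto; unfold padj, sNE, sNW, sSW, sSE; simpl; lia. Qed.

Definition inD (d : dart) : Prop := C0 occ (lsq d) /\ OV (rsq d).
Lemma isD_st a b : isD (st a, st b) = true <-> C0 occ a /\ OV b.
Proof. rewrite <- st_SC, <- st_SO. destruct (st a), (st b); simpl; intuition congruence. Qed.
Lemma out_sq_w w o : out_sq (locw w) o = (st (lsq (w,o)), st (rsq (w,o))).
Proof. destruct o; reflexivity. Qed.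
Lemma outD_iff w o : outD (locw w) o = true <-> inD (w,o).
Proof. unfold outD. rewrite out_sq_w, isD_st. reflexivity. Qed.
Lemma outD_dec w o : outD (locw w) o = dec (inD (w,o)).
Proof. destruct (outD (locw w) o) eqn:E; symmetry; [apply decP | apply decF]; rewrite <- outD_iff; congruence. Qed.
Lemma inDl_iff d : inDl (locw (tgt d)) (snd d) = true <-> inD d.
Proof. unfold inDl. rewrite out_sq_w. rewrite isD_st.
  unfold inD. change (C0 occ (rsq (drev d)) /\ OV (lsq (drev d)) <-> C0 occ (lsq d) /\ OV (rsq d)).
  rewrite lsq_rev, rsq_rev. tauto. Qed.
Lemma bdl_iff w o : bdl (locw w) o = true <-> (C0 occ (lsq (w,o)) /\ OV (rsq (w,o))) \/ (C0 occ (rsq (w,o)) /\ OV (lsq (w,o))).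
Proof. unfold bdl. rewrite out_sq_w. rewrite orb_true_iff, !isD_st. reflexivity. Qed.

Definition succ (d : dart) : dart :=
  let w := tgt d in
  if dec (inD (w, rotL (snd d))) then (w, rotL (snd d))
  else if dec (inD (w, snd d)) then (w, snd d) else (w, rotR (snd d)).
Lemma succ_loc d : succ d = (tgt d, succl (locw (tgt d)) (snd d)).
Proof. unfold succ, succl. rewrite !outD_dec. destruct (dec _); auto. destruct (dec _); auto. Qed.
Lemma src_succ d : src (succ d) = tgt d.
Proof. rewrite succ_loc; reflexivity. Qed.
Lemma succ_D d : inD d -> inD (succ d).
Proof. intro H. rewrite succ_loc. apply outD_iff. apply L1. rewrite validw; simpl. apply inDl_iff; auto. Qed.
Lemma succ_inj d1 d2 : inD d1 -> inD d2 -> succ d1 = succ d2 -> d1 = d2.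
Proof. intros H1 H2 E. rewrite !succ_loc in E.
  assert (E1 : tgt d1 = tgt d2) by (apply (f_equal fst) in E; exact E).
  assert (E2 : succl (locw (tgt d1)) (snd d1) = succl (locw (tgt d2)) (snd d2)) by (apply (f_equal snd) in E; exact E).
  apply inDl_iff in H1; apply inDl_iff in H2. rewrite E1 in H1, E2.
  assert (snd d1 = snd d2). { apply (L2 (locw (tgt d2))); auto. rewrite validw, H1, H2; reflexivity. }
  rewrite (tgt_in d1 (tgt d1)), (tgt_in d2 (tgt d2)) by reflexivity. rewrite E1, H; reflexivity. Qed.
Lemma inD_not_rev d : inD d -> ~ inD (drev d).
Proof. intros [H1 H2] [H3 H4]. rewrite lsq_rev in H3. apply OV_nC0 in H2; contradiction. Qed.
Lemma inD_ed_inj d d' : inD d -> inD d' -> ed d = ed d' -> d = d'.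
Proof. intros H1 H2 E. destruct (ed_eq _ _ E); auto. subst. exfalso; apply (inD_not_rev d'); auto. Qed.

Definition darts_of (c : pt) : list dart :=
  [(c,DE); ((fst c + 1, snd c),DN); ((fst c + 1, snd c + 1),DW); ((fst c, snd c + 1),DS)].
Lemma darts_of_spec d : In d (darts_of (lsq d)).
Proof. destruct d as [[x y] o]; destruct o; unfold darts_of, lsq; simpl;
  [left; reflexivity | right; left | right; right; left | right; right; right; left]; repeat f_equal; lia. Qed.
Definition dir_eq_dec (a b : dir) : {a = b} + {a <> b}.
Proof. decide equality. Defined.
Definition dart_eq_dec (a b : dart) : {a = b} + {a <> b}.
Proof. decide equality; [apply dir_eq_dec | decide equality; apply Z.eq_dec]. Defined.
Definition DLall : list dart := filter (fun d => dec (inD d)) (nodup dart_eq_dec (flat_map darts_of Lc)).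
Lemma In_DLall d : In d DLall <-> inD d.
Proof. unfold DLall. rewrite filter_In, nodup_In, in_flat_map, decP. split; [tauto|].
  intro H; split; auto. exists (lsq d); split; [apply Lc_spec, H | apply darts_of_spec]. Qed.
Lemma NoDup_DLall : NoDup DLall.
Proof. apply NoDup_filter, NoDup_nodup. Qed.

Definition it (n : nat) (d : dart) : dart := Nat.iter n succ d.
Lemma it_S n d : it (S n) d = succ (it n d). Proof. reflexivity. Qed.
Lemma it_0 d : it 0 d = d. Proof. reflexivity. Qed.
Lemma it_add m n d : it (m + n) d = it m (it n d).
Proof. induction m; [reflexivity|]. change (succ (it (m+n) d) = succ (it m (it n d))). rewrite IHm; reflexivity. Qed.
Lemma it_D n d : inD d -> inD (it n d).
Proof. intro H; induction n; auto. rewrite it_S; apply succ_D; auto. Qed.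
Lemma src_it_S n d : src (it (S n) d) = tgt (it n d).
Proof. rewrite it_S; apply src_succ. Qed.
Lemma it_shift d i k : inD d -> it i d = it (i + k) d -> d = it k d.
Proof. intro HD; induction i; intros H; auto.
  apply IHi. apply succ_inj; try apply it_D; auto. Qed.

Lemma nth_map_seq {A} (f : nat -> A) n i x : (i < n)%nat -> nth i (map f (seq 0 n)) x = f i.
Proof. intro H. rewrite nth_indep with (d' := f O) by (rewrite length_map, length_seq; auto).
  rewrite map_nth, seq_nth; auto. Qed.
Lemma period_ex d : inD d -> exists p, (0 < p)%nat /\ it p d = d.
Proof. intro HD. set (N := length DLall). set (l := map (fun i => it i d) (seq 0 (S N))).
  assert (Hincl : incl l DLall). { intros x Hx. unfold l in Hx; apply in_map_iff in Hx.
    destruct Hx as [i [<- _]]. apply In_DLall, it_D, HD. }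
  destruct (classic (NoDup l)) as [Hn|Hn].
  - apply (NoDup_incl_length Hn) in Hincl. unfold l in Hincl; rewrite length_map, length_seq in Hincl. lia.
  - rewrite (NoDup_nth l d) in Hn. apply not_all_ex_not in Hn; destruct Hn as [i Hn].
    apply not_all_ex_not in Hn; destruct Hn as [j Hn].
    unfold l in Hn; rewrite length_map, length_seq in Hn.
    assert (Hij : (i < S N)%nat /\ (j < S N)%nat /\ it i d = it j d /\ i <> j).
    { destruct (classic (i < S N)%nat) as [Hi|Hi]; [|exfalso; apply Hn; intros; contradiction].
      destruct (classic (j < S N)%nat) as [Hj|Hj]; [|exfalso; apply Hn; intros; contradiction].
      rewrite !nth_map_seq in Hn by auto.
      destruct (classic (it i d = it j d)) as [E|E]; [|exfalso; apply Hn; intros; contradiction].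
      repeat split; auto. }
    clear Hn. destruct Hij as [Hi [Hj [E Hne]]].
    destruct (Nat.lt_ge_cases i j).
    + exists (j - i)%nat; split; [lia|]. symmetry; apply (it_shift d i); auto. replace (i + (j - i))%nat with j by lia; auto.
    + exists (i - j)%nat; split; [lia|]. symmetry; apply (it_shift d j); auto. replace (j + (i - j))%nat with i by lia; auto.
Qed.

Definition perP (d : dart) (n : nat) : Prop := (0 < n)%nat /\ (inD d -> it n d = d).
Lemma per_ex d : exists n, perP d n /\ forall m, perP d m -> (n <= m)%nat.
Proof. assert (H : exists n, perP d n).
  { destruct (classic (inD d)) as [HD|HD].
    - destruct (period_ex d HD) as [p [H1 H2]]; exists p; split; auto.
    - exists 1%nat; split; auto; intro; contradiction. }
  destruct (Wf_nat.dec_inh_nat_subset_has_unique_least_element (perP d) (fun n => classic _) H) as [n [[H1 H2] _]].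
  exists n; split; auto. Qed.
Definition per (d : dart) : nat := proj1_sig (constructive_indefinite_description _ (per_ex d)).
Lemma per_spec d : perP d (per d) /\ forall m, perP d m -> (per d <= m)%nat.
Proof. unfold per; destruct (constructive_indefinite_description _ _); simpl; auto. Qed.
Lemma per_pos d : (0 < per d)%nat.
Proof. apply (proj1 (per_spec d)). Qed.
Lemma it_per d : inD d -> it (per d) d = d.
Proof. apply (proj1 (per_spec d)). Qed.
Lemma per_min d m : inD d -> (0 < m)%nat -> it m d = d -> (per d <= m)%nat.
Proof. intros; apply (proj2 (per_spec d)); split; auto. Qed.
Lemma it_mult d q : inD d -> it (q * per d) d = d.
Proof. intro HD; induction q; auto. change (it (per d + q * per d) d = d). rewrite it_add, IHq, it_per; auto. Qed.
Lemma it_mod d n : inD d -> it n d = it (n mod per d) d.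
Proof. intro HD. pose proof (per_pos d).
  rewrite (Nat.div_mod n (per d)) at 1 by lia. rewrite Nat.add_comm, it_add, Nat.mul_comm, it_mult; auto. Qed.
Lemma it_distinct d i j : inD d -> (i < per d)%nat -> (j < per d)%nat -> it i d = it j d -> i = j.
Proof. intros HD Hi Hj E. destruct (Nat.lt_total i j) as [H|[H|H]]; auto; exfalso.
  - assert (E' : d = it (j - i) d) by (apply (it_shift d i); [auto|]; replace (i + (j - i))%nat with j by lia; auto).
    pose proof (per_min d (j - i) HD ltac:(lia) (eq_sym E')). lia.
  - assert (E' : d = it (i - j) d) by (apply (it_shift d j); [auto|]; replace (j + (i - j))%nat with i by lia; auto).
    pose proof (per_min d (i - j) HD ltac:(lia) (eq_sym E')). lia. Qed.
Lemma it_eq_mod d i j : inD d -> it i d = it j d -> (i mod per d = j mod per d)%nat.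
Proof. intros HD E. pose proof (per_pos d). rewrite (it_mod d i), (it_mod d j) in E by auto.
  apply it_distinct in E; auto; apply Nat.mod_upper_bound; lia. Qed.
Lemma it_it d m n : it m (it n d) = it (m + n) d.
Proof. rewrite it_add; auto. Qed.

Definition cyc (d : dart) : list pt := map (fun i => src (it i d)) (seq 0 (per d)).
Lemma length_cyc d : length (cyc d) = per d.
Proof. unfold cyc; rewrite length_map, length_seq; auto. Qed.
Definition gC (C : list pt) (t : nat) : pt := nth (t mod length C) C origin.
Lemma gC_cyc d t : inD d -> gC (cyc d) t = src (it t d).
Proof. intro HD. unfold gC. rewrite length_cyc. unfold cyc. rewrite nth_map_seq.
  rewrite <- it_mod; auto. apply Nat.mod_upper_bound; pose proof (per_pos d); lia. Qed.
Lemma gC_lt C t : (t < length C)%nat -> gC C t = nth t C origin.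
Proof. intro H; unfold gC; rewrite Nat.mod_small; auto. Qed.
Lemma gC_nxt C t : nth (nxt (length C) t) C origin = gC C (S t).
Proof. reflexivity. Qed.
Lemma gC_per C t : (0 < length C)%nat -> gC C (t + length C) = gC C t.
Proof. intro H; unfold gC. f_equal. rewrite <- Nat.Div0.add_mod_idemp_r, Nat.Div0.mod_same, Nat.add_0_r; auto. Qed.
Lemma gC_in C t : (0 < length C)%nat -> In (gC C t) C.
Proof. intro H; unfold gC; apply nth_In, Nat.mod_upper_bound; lia. Qed.
Lemma in_gC C v : In v C -> exists t, (t < length C)%nat /\ gC C t = v.
Proof. intro H. apply In_nth with (d := origin) in H. destruct H as [t [H1 H2]]. exists t; split; auto.
  rewrite gC_lt; auto. Qed.

Definition bnd (v : pt) := -M <= fst v <= M + 1 /\ -M <= snd v <= M + 1.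
Definition sqA (e : edge) : pt := fst e.
Definition sqB (e : edge) : pt := if snd e then (fst (fst e), snd (fst e) - 1) else (fst (fst e) - 1, snd (fst e)).
Lemma side_of_iff e c : side_of e c <-> c = sqA e \/ c = sqB e.
Proof. destruct e as [[x y] [|]]; destruct c as [a b]; unfold sqA, sqB; simpl; split; intros [H|H]; pinj; intros;
  first [left; f_equal; lia | right; f_equal; lia]. Qed.
Lemma side_A e : side_of e (sqA e). Proof. apply side_of_iff; auto. Qed.
Lemma side_B e : side_of e (sqB e). Proof. apply side_of_iff; auto. Qed.
Lemma GC_iff e : GC_edge occ e <-> C0 occ (sqA e) \/ C0 occ (sqB e).
Proof. unfold GC_edge; split.
  - intros [c [H1 H2]]; apply side_of_iff in H2; destruct H2; subst; auto.
  - intros [H|H]; eexists; split; eauto using side_A, side_B. Qed.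
Lemma GC_ends_bnd e : GC_edge occ e -> bnd (fst (ends e)) /\ bnd (snd (ends e)).
Proof. rewrite GC_iff; intros H. destruct e as [[x y] [|]]; unfold sqA, sqB, bnd in *; simpl in *;
  destruct H as [H|H]; apply C0_bound in H; simpl in H; lia. Qed.
Lemma joins_bnd e u v : GC_edge occ e -> joins e u v -> bnd u /\ bnd v.
Proof. intros H1 H2; apply GC_ends_bnd in H1; destruct H2 as [[-> ->]|[-> ->]]; tauto. Qed.
Lemma padj_edge s t : padj s t -> exists e, (s = sqA e /\ t = sqB e) \/ (s = sqB e /\ t = sqA e).
Proof. destruct s as [a b], t as [c d]; unfold padj; simpl; intros H.
  destruct H as [[H1 H2]|[[H1 H2]|[[H1 H2]|[H1 H2]]]]; subst.
  - exists ((a+1,b),false); right; unfold sqA, sqB; simpl; split; f_equal; lia.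
  - exists ((a,b),false); left; unfold sqA, sqB; simpl; split; f_equal; lia.
  - exists ((a,b+1),true); right; unfold sqA, sqB; simpl; split; f_equal; lia.
  - exists ((a,b),true); left; unfold sqA, sqB; simpl; split; f_equal; lia. Qed.

Definition gcw (g : nat -> pt) (L : nat) :=
  forall t, (t < L)%nat -> exists e, GC_edge occ e /\ joins e (g t) (g (S t)).
Lemma gcw_gwalk g L : gcw g L -> gwalk g L.
Proof. intros H t Ht; destruct (H t Ht) as [e [_ He]]; exists e; auto. Qed.
Lemma gcw_step g L t e : gcw g L -> (t < L)%nat -> joinsb e (g t) (g (S t)) = true -> GC_edge occ e.
Proof. intros H Ht Hj. destruct (H t Ht) as [e' [H1 H2]]. apply (reflect_iff _ _ (joinsb_spec _ _ _)) in Hj.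
  rewrite (joins_uniq _ _ _ _ Hj H2); auto. Qed.
Lemma gcw_bnd g L t : gcw g L -> (t < L)%nat -> bnd (g t) /\ bnd (g (S t)).
Proof. intros H Ht; destruct (H t Ht) as [e [H1 H2]]; eapply joins_bnd; eauto. Qed.

Lemma ec_zero g L e : (forall t, (t < L)%nat -> joinsb e (g t) (g (S t)) = false) -> ec g L e = 0.
Proof. intro H; unfold ec, cnt; apply sumN_zero; intros t Ht; rewrite H; auto. Qed.

Lemma par_edge g L e : gwalk g L -> closedw g L ->
  par g L (sqA e) = xorb (par g L (sqB e)) (Z.odd (ec g L e)).
Proof. intros Hw Hc. destruct e as [[x y] [|]]; unfold sqA, sqB; simpl.
  - rewrite (par_v g L x (y-1) y Hw Hc) by lia. destruct (par g L (x,y)), (Z.odd _); reflexivity.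
  - rewrite (par_h g L (x-1) y x) by lia. destruct (par g L (x,y)), (Z.odd _); reflexivity. Qed.

Lemma par_padj g L s t : gwalk g L -> closedw g L -> padj s t ->
  exists e, side_of e s /\ side_of e t /\ par g L s = xorb (par g L t) (Z.odd (ec g L e)).
Proof. intros Hw Hc H. destruct (padj_edge s t H) as [e [[-> ->]|[-> ->]]]; exists e;
  repeat split; auto using side_A, side_B; rewrite (par_edge g L e Hw Hc);
  destruct (par g L (sqB e)), (Z.odd _); reflexivity. Qed.

Lemma OV_par0 g L s : gcw g L -> closedw g L -> OV s -> par g L s = false.
Proof. intros Hg Hc H. induction H.
  - unfold par, cnt. rewrite sumN_zero; auto. intros t Ht. destruct (gcw_bnd g L t Hg Ht) as [[H1 _] _].
    destruct (vcr base (g t) (g (S t))) eqn:E; auto. unfold vcr, base in E; simpl in E.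
    apply andb_true_iff in E; destruct E as [E _]; apply andb_true_iff in E; destruct E as [_ E].
    apply Z.ltb_lt in E; lia.
  - destruct (par_padj g L s t (gcw_gwalk _ _ Hg) Hc H0) as [e [H2 [H3 H4]]]. rewrite H4, IHOV.
    rewrite ec_zero; auto. intros t0 Ht0. destruct (joinsb e (g t0) (g (S t0))) eqn:E; auto.
    apply (gcw_step g L t0 e Hg Ht0) in E. apply GC_iff in E.
    apply side_of_iff in H2; apply side_of_iff in H3. apply OV_nC0 in H1.
    exfalso. destruct E as [E|E]; destruct H2 as [H2|H2]; destruct H3 as [H3|H3]; subst;
      try contradiction; unfold padj in H0; destruct e as [[x y] [|]]; unfold sqA, sqB in *; simpl in *; lia.
Qed.

Definition cycGC (C : list pt) := (0 < length C)%nat /\ gcw (gC C) (length C).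
Lemma closed_gC C : (0 < length C)%nat -> closedw (gC C) (length C).
Proof. intro H; unfold closedw, gC. rewrite Nat.Div0.mod_same, Nat.Div0.mod_0_l; auto. Qed.
Lemma is_cycle_GC C : is_cycle occ C -> cycGC C.
Proof. intros [H1 [H2 H3]]; split; [lia|]. intros t Ht. destruct (H3 t Ht) as [e [He1 He2]].
  exists e; split; auto. rewrite gC_lt by auto. rewrite <- gC_nxt; auto. Qed.
Lemma cycle_edge_iff C e : cycle_edge C e <-> exists t, (t < length C)%nat /\ joinsb e (gC C t) (gC C (S t)) = true.
Proof. unfold cycle_edge; split; intros [t [Ht H]]; exists t; split; auto.
  - rewrite gC_lt by auto; rewrite <- gC_nxt. apply (reflect_iff _ _ (joinsb_spec _ _ _)); auto.
  - rewrite gC_lt in H by auto; rewrite <- gC_nxt in H. apply (reflect_iff _ _ (joinsb_spec _ _ _)); auto. Qed.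
Lemma cycle_edge_GC C e : cycGC C -> cycle_edge C e -> GC_edge occ e.
Proof. intros [_ H] He. apply cycle_edge_iff in He; destruct He as [t [Ht He]]. eapply gcw_step; eauto. Qed.
Lemma cycle_edge_ends C e : cycGC C -> cycle_edge C e -> In (fst (ends e)) C /\ In (snd (ends e)) C.
Proof. intros [H0 _] He. apply cycle_edge_iff in He; destruct He as [t [Ht He]].
  apply (reflect_iff _ _ (joinsb_spec _ _ _)) in He. pose proof (gC_in C t H0). pose proof (gC_in C (S t) H0).
  destruct He as [[<- <-]|[<- <-]]; auto. Qed.
Lemma noncyc_ec0 C e : ~ cycle_edge C e -> ec (gC C) (length C) e = 0.
Proof. intro H. apply ec_zero. intros t Ht. destruct (joinsb e _ _) eqn:E; auto.
  exfalso; apply H, cycle_edge_iff; eauto. Qed.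
Definition parC C s := par (gC C) (length C) s.
Lemma OV_parC C s : cycGC C -> OV s -> parC C s = false.
Proof. intros [H1 H2] H; apply OV_par0; auto using closed_gC. Qed.
Lemma parC_edge C e : cycGC C -> parC C (sqA e) = xorb (parC C (sqB e)) (Z.odd (ec (gC C) (length C) e)).
Proof. intros [H1 H2]; apply par_edge; auto using closed_gC, gcw_gwalk. Qed.
Lemma parC_off C e : cycGC C -> ~ cycle_edge C e -> parC C (sqA e) = parC C (sqB e).
Proof. intros H1 H2. rewrite parC_edge, noncyc_ec0; auto. destruct (parC C (sqB e)); auto. Qed.

Definition rep (x : cell) : pt := match x with Sq c => c | Ed e => fst e | Vx v => v end.
Lemma not_in_not_edge C e v : cycGC C -> ~ In v C -> (v = fst (ends e) \/ v = snd (ends e)) -> ~ cycle_edge C e.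
Proof. intros H1 H2 H3 H4. apply cycle_edge_ends in H4; auto. destruct H3; subst; tauto. Qed.

Lemma inc_par C x y : cycGC C -> off_cycle C x -> off_cycle C y -> incident x y -> parC C (rep x) = parC C (rep y).
Proof. intros HC Hx Hy Hi.
  assert (SE : forall c e, side_of e c -> ~ cycle_edge C e -> parC C c = parC C (fst e)).
  { intros c e H1 H2. apply side_of_iff in H1. destruct H1 as [->| ->]; auto.
    change (parC C (sqB e) = parC C (sqA e)). rewrite (parC_off C e); auto. }
  assert (EV : forall e v, ~ cycle_edge C e -> ~ In v C -> (v = fst (ends e) \/ v = snd (ends e)) -> parC C (fst e) = parC C v).
  { intros e v H1 H2 H3. destruct e as [[a b] [|]]; simpl in *; destruct H3 as [->| ->]; auto.
    - pose proof (parC_off C ((a+1,b),false) HC) as P. unfold sqA, sqB in P; simpl in P.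
      replace (a + 1 - 1) with a in P by lia. symmetry; apply P. eapply not_in_not_edge; eauto; simpl; auto.
    - pose proof (parC_off C ((a,b+1),true) HC) as P. unfold sqA, sqB in P; simpl in P.
      replace (b + 1 - 1) with b in P by lia. symmetry; apply P. eapply not_in_not_edge; eauto; simpl; auto. }
  destruct x as [c|e|v], y as [c'|e'|v']; simpl in *; try contradiction.
  - apply SE; auto.
  - symmetry; apply SE; auto.
  - apply EV; auto.
  - symmetry; apply EV; auto.
Qed.
Lemma comp_par C x y : cycGC C -> off_cycle C x -> same_component C x y -> parC C (rep x) = parC C (rep y).
Proof. intros HC Hx H. apply clos_rt_rt1n in H. induction H; auto.
  destruct H as [H1 [H2 H3]]. rewrite (inc_par C x y); auto. Qed.
Lemma comp_off C x y : off_cycle C x -> same_component C x y -> off_cycle C y.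
Proof. intros Hx H. apply clos_rt_rt1n in H. induction H; auto. apply IHclos_refl_trans_1n; apply H. Qed.

Lemma rep_comp C x : cycGC C -> off_cycle C x -> same_component C x (Sq (rep x)).
Proof. intros HC Hx. destruct x as [c|e|v]; simpl.
  - apply rt_refl.
  - apply rt_step; repeat split; auto. simpl. apply side_A.
  - apply rt_trans with (Ed (v,true)); apply rt_step; repeat split; simpl; auto.
    all: try (eapply not_in_not_edge; eauto; simpl; auto).
Qed.

Lemma par_true_step g L s : par g L s = true -> exists t, (t < L)%nat /\ vcr s (g t) (g (S t)) = true.
Proof. intro H. destruct (classic (exists t, (t < L)%nat /\ vcr s (g t) (g (S t)) = true)) as [E|E]; auto.
  exfalso. unfold par, cnt in H. rewrite sumN_zero in H; [discriminate|]. intros t Ht.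
  destruct (vcr s (g t) (g (S t))) eqn:Q; auto. exfalso; apply E; eauto. Qed.
Lemma cyc_bnd C v : cycGC C -> In v C -> bnd v.
Proof. intros [H0 H] Hv. apply in_gC in Hv; destruct Hv as [t [Ht <-]]. apply (gcw_bnd _ _ t H Ht). Qed.
Lemma par1_box1 C s : cycGC C -> parC C s = true -> fst s <= M /\ -M <= snd s <= M.
Proof. intros [H0 H] Hp. apply par_true_step in Hp. destruct Hp as [t [Ht Hv]].
  destruct (gcw_bnd _ _ t H Ht) as [[B1 B2] [B3 B4]]. unfold vcr in Hv.
  repeat (rewrite andb_true_iff in Hv || rewrite orb_true_iff in Hv). rewrite !Z.eqb_eq, Z.ltb_lt in Hv. destruct Hv as [[? ?] [[? ?]|[? ?]]]; lia. Qed.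
Lemma par1_box C s : cycGC C -> parC C s = true -> -M - 1 <= fst s <= M /\ -M <= snd s <= M.
Proof. intros HC Hp. pose proof (par1_box1 C s HC Hp). split; [|lia]. split; [|lia].
  destruct (Z_le_gt_dec (-M-1) (fst s)); auto. exfalso. destruct s as [x y]; simpl in *.
  assert (A : forall n : nat, forall y', y' = M + 1 - Z.of_nat n -> parC C (x, y') = false).
  { induction n; intros y' Hy'.
    - destruct (parC C (x,y')) eqn:E; auto. apply par1_box1 in E; auto. simpl in E; lia.
    - assert (Q : ~ cycle_edge C ((x, y'+1), true)).
      { eapply not_in_not_edge; eauto. intro Hin; apply (cyc_bnd C) in Hin; auto. unfold bnd in Hin; simpl in Hin; lia. }
      destruct HC as [HC0 HC1]. unfold parC.
      rewrite (par_v _ _ x y' (y'+1) (gcw_gwalk _ _ HC1) (closed_gC _ HC0)) by lia.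
      fold (parC C (x, y'+1)). rewrite IHn by lia. rewrite noncyc_ec0 by auto. reflexivity. }
  assert (y <= M) by lia. rewrite (A (Z.to_nat (M + 1 - y)) y) in Hp by lia. discriminate. Qed.

Definition zr (a : Z) (n : nat) : list Z := map (fun i => a + Z.of_nat i) (seq 0 n).
Lemma In_zr a n z : a <= z < a + Z.of_nat n -> In z (zr a n).
Proof. intro H. unfold zr. apply in_map_iff. exists (Z.to_nat (z - a)). split; [lia|]. apply in_seq; lia. Qed.
Definition boxl : list cell :=
  flat_map (fun x => flat_map (fun y => [Sq (x,y); Ed ((x,y),true); Ed ((x,y),false); Vx (x,y)])
    (zr (-M) (Z.to_nat (2*M+1)))) (zr (-M-1) (Z.to_nat (2*M+2))).
Lemma in_boxl x : -M - 1 <= fst (rep x) <= M -> -M <= snd (rep x) <= M -> In x boxl.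
Proof. intros H1 H2. pose proof M_nonneg. unfold boxl. apply in_flat_map. exists (fst (rep x)). split.
  apply In_zr; lia. apply in_flat_map. exists (snd (rep x)); split. apply In_zr; lia.
  destruct x as [[a b]|[[a b] o]|[a b]]; simpl; [|destruct o|]; simpl; tauto. Qed.
Lemma comp_finite C x : cycGC C -> off_cycle C x -> parC C (rep x) = true -> finite_set (same_component C x).
Proof. intros HC Hx Hp. exists boxl. intros y Hy. pose proof (comp_par C x y HC Hx Hy). rewrite Hp in H.
  symmetry in H; apply par1_box in H; auto. apply in_boxl; tauto. Qed.

Lemma sq_conn C s t : cycGC C -> ~ C0 occ s -> ~ C0 occ t -> padj s t -> same_component C (Sq s) (Sq t).
Proof. intros HC Hs Ht H. destruct (padj_edge s t H) as [e He].
  assert (Hne : ~ cycle_edge C e).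
  { intro Q. apply cycle_edge_GC in Q; auto. apply GC_iff in Q. destruct He as [[-> ->]|[-> ->]]; tauto. }
  apply rt_trans with (Ed e); apply rt_step; repeat split; simpl; auto;
  destruct He as [[-> ->]|[-> ->]]; auto using side_A, side_B. Qed.
Lemma OV_conn C s : cycGC C -> OV s -> same_component C (Sq s) (Sq base).
Proof. intros HC H; induction H; [apply rt_refl|]. apply rt_trans with (Sq t); auto.
  apply sq_conn; auto. apply OV_nC0; auto. Qed.
Lemma list_bound (l : list cell) : exists N, forall c, In (Sq c) l -> fst c < N.
Proof. induction l as [|x l [N HN]]; [exists 0; simpl; tauto|].
  exists (Z.max N (fst (rep x) + 1)). intros c [H|H]; [subst; simpl; lia|]. specialize (HN c H); lia. Qed.
Lemma comp_infinite C s : cycGC C -> OV s -> ~ finite_set (same_component C (Sq s)).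
Proof. intros HC H [l Hl]. destruct (list_bound l) as [N HN].
  assert (A : forall n : nat, same_component C (Sq base) (Sq (M + 1 + Z.of_nat n, 0))).
  { induction n. replace (M + 1 + Z.of_nat 0) with (M+1) by lia; apply rt_refl.
    apply rt_trans with (Sq (M + 1 + Z.of_nat n, 0)); auto. apply sq_conn; auto; try (apply far_nC0; simpl; lia).
    unfold padj; simpl; lia. }
  pose proof M_nonneg.
  specialize (HN _ (Hl _ (rt_trans _ _ _ _ _ (OV_conn C s HC H) (A (Z.to_nat (N + Z.abs M)))))). simpl in HN. lia. Qed.

Lemma lsq_rsq_AB d : (lsq d = sqA (ed d) /\ rsq d = sqB (ed d)) \/ (lsq d = sqB (ed d) /\ rsq d = sqA (ed d)).
Proof. destruct d as [[x y] o]; destruct o; unfold lsq, rsq, ed, sqA, sqB; simpl;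
  first [left; split; f_equal; lia | right; split; f_equal; lia]. Qed.
Lemma par_lr C d : cycGC C -> parC C (lsq d) = xorb (parC C (rsq d)) (Z.odd (ec (gC C) (length C) (ed d))).
Proof. intro HC. destruct (lsq_rsq_AB d) as [[-> ->]|[-> ->]]; rewrite (parC_edge C (ed d) HC); auto.
  destruct (parC C (sqB (ed d))), (Z.odd _); reflexivity. Qed.
Lemma sq_conn2 C e s t : ~ cycle_edge C e -> side_of e s -> side_of e t -> same_component C (Sq s) (Sq t).
Proof. intros H1 H2 H3. apply rt_trans with (Ed e); apply rt_step; repeat split; simpl; auto. Qed.

Lemma cyc_cycGC d : inD d -> cycGC (cyc d).
Proof. intro HD. split. rewrite length_cyc; apply per_pos. intros t Ht. rewrite !gC_cyc by auto.
  exists (ed (it t d)). split. apply GC_iff. destruct (lsq_rsq_AB (it t d)) as [[<- _]|[<- _]]; left + right; apply (it_D t d HD).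
  rewrite src_it_S; apply ed_joins. Qed.
Lemma cyc_edge_iff d e : inD d -> (cycle_edge (cyc d) e <-> exists t, (t < per d)%nat /\ e = ed (it t d)).
Proof. intro HD. rewrite cycle_edge_iff, length_cyc. split; intros [t [Ht H]]; exists t; split; auto;
  rewrite !gC_cyc, src_it_S in * by auto; apply joinsb_dart; auto. Qed.
Lemma sum_one (f : nat -> Z) L t0 : (forall t, (t < L)%nat -> f t = 0 \/ f t = 1) -> (t0 < L)%nat -> f t0 = 1 ->
  (forall t, (t < L)%nat -> f t = 1 -> t = t0) -> sumN f L = 1.
Proof. induction L; intros H1 H2 H3 H4; [lia|]. simpl. destruct (Nat.eq_dec t0 L).
  - subst. rewrite sumN_zero; [lia|]. intros t Ht. destruct (H1 t ltac:(lia)) as [Q|Q]; auto. apply H4 in Q; lia.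
  - rewrite IHL; auto; try lia. destruct (H1 L ltac:(lia)) as [Q|Q]; [lia|]. apply H4 in Q; lia. Qed.
Lemma cyc_ec1 d t : inD d -> ec (gC (cyc d)) (length (cyc d)) (ed (it t d)) = 1.
Proof. intro HD. rewrite (it_mod d t HD). set (t0 := (t mod per d)%nat).
  assert (Ht0 : (t0 < per d)%nat) by (apply Nat.mod_upper_bound; pose proof (per_pos d); lia).
  unfold ec, cnt. rewrite length_cyc. apply (sum_one _ _ t0); auto.
  - intros t' _; destruct (joinsb _ _ _); auto.
  - rewrite !gC_cyc, src_it_S by auto. rewrite (proj2 (joinsb_dart _ _)); auto.
  - intros t' Ht' E. rewrite !gC_cyc, src_it_S in E by auto. destruct (joinsb _ _ _) eqn:Q; [|discriminate].
    apply joinsb_dart in Q. apply inD_ed_inj in Q; try apply it_D; auto. apply it_distinct in Q; auto. Qed.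
Lemma cyc_par_lsq d t : inD d -> parC (cyc d) (lsq (it t d)) = true /\ parC (cyc d) (rsq (it t d)) = false.
Proof. intro HD. assert (R : parC (cyc d) (rsq (it t d)) = false).
  { apply OV_parC. apply cyc_cycGC; auto. apply (it_D t d HD). }
  split; auto. rewrite par_lr by (apply cyc_cycGC; auto). rewrite R, cyc_ec1; auto. Qed.
Lemma cyc_edge_dart d e : inD d -> cycle_edge (cyc d) e -> exists t, e = ed (it t d).
Proof. intros HD H; apply cyc_edge_iff in H; auto; destruct H as [t [_ H]]; eauto. Qed.
Lemma cyc_edge_of d t : inD d -> cycle_edge (cyc d) (ed (it t d)).
Proof. intro HD. apply cyc_edge_iff; auto. exists (t mod per d)%nat; split.
  apply Nat.mod_upper_bound; pose proof (per_pos d); lia. rewrite <- it_mod; auto. Qed.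
Lemma cyc_edge_OV d e : inD d -> cycle_edge (cyc d) e -> exists c, side_of e c /\ OV c.
Proof. intros HD H. apply cyc_edge_dart in H; auto. destruct H as [t ->]. exists (rsq (it t d)); split.
  apply side_rsq. apply (it_D t d HD). Qed.
Lemma sides_par0 d dl : inD d -> inD dl -> ~ cycle_edge (cyc d) (ed dl) ->
  parC (cyc d) (lsq dl) = false /\ parC (cyc d) (rsq dl) = false.
Proof. intros HD HDl H. assert (R : parC (cyc d) (rsq dl) = false) by (apply OV_parC; [apply cyc_cycGC; auto | apply HDl]).
  split; auto. rewrite par_lr by (apply cyc_cycGC; auto). rewrite R, noncyc_ec0; auto. Qed.

Definition redge (s : pt) : edge := ((fst s + 1, snd s), false).
Definition rsq1 (s : pt) : pt := (fst s + 1, snd s).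
Lemma redge_sides s : side_of (redge s) s /\ side_of (redge s) (rsq1 s).
Proof. destruct s as [x y]; unfold redge, rsq1; simpl; split; [right|left]; f_equal; lia. Qed.

Lemma walk_right (P : pt -> Prop) : (forall s, M < fst s -> P s) -> (forall s, fst s <= M -> P (rsq1 s) -> P s) -> forall s, P s.
Proof. intros H1 H2. assert (A : forall n : nat, forall s, Z.to_nat (M + 1 - fst s) = n -> P s).
  { induction n; intros s Hs. apply H1; lia. apply H2; [lia|]. apply IHn. unfold rsq1; simpl; lia. }
  intro s; apply (A _ s eq_refl). Qed.

Lemma par0_infinite d s : inD d -> parC (cyc d) s = false -> ~ finite_set (same_component (cyc d) (Sq s)).
Proof. intro HD. pose proof (cyc_cycGC d HD) as HC. revert s. apply (walk_right (fun s => parC (cyc d) s = false -> ~ finite_set (same_component (cyc d) (Sq s)))).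
  - intros s Hs _. apply comp_infinite; auto. apply OV_far; auto.
  - intros s Hs IH Hp. destruct (classic (cycle_edge (cyc d) (redge s))) as [E|E].
    + apply cyc_edge_dart in E; auto. destruct E as [t Et]. destruct (cyc_par_lsq d t HD) as [P1 P2].
      pose proof (proj1 (redge_sides s)) as S1. rewrite Et in S1. apply side_ed in S1. destruct S1 as [S1|S1].
      * rewrite <- S1 in P1; congruence.
      * apply comp_infinite; auto. rewrite S1. apply (it_D t d HD).
    + intros [l Hl]. apply IH.
      * destruct s as [x y]. unfold rsq1, redge in *; simpl in *.
        pose proof (par_lr (cyc d) ((x+1,y),DN) HC) as Q. unfold lsq, rsq, ed in Q; simpl in Q.
        replace (x+1-1) with x in Q by lia. rewrite noncyc_ec0 in Q by exact E. rewrite Hp in Q.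
        destruct (parC (cyc d) (x+1,y)); simpl in Q; auto.
      * exists l. intros x Hx. apply Hl. apply rt_trans with (Sq (rsq1 s)); auto.
        apply (sq_conn2 _ (redge s)); auto; apply redge_sides.
Qed.

Lemma par_step_right C s : cycGC C -> ~ cycle_edge C (redge s) -> parC C (rsq1 s) = parC C s.
Proof. intros HC E. destruct s as [x y]. unfold rsq1, redge in *; simpl in *.
  pose proof (par_lr C ((x+1,y),DN) HC) as Q. unfold lsq, rsq, ed in Q; simpl in Q.
  replace (x+1-1) with x in Q by lia. rewrite noncyc_ec0 in Q by exact E. rewrite Q.
  destruct (parC C (x+1,y)); reflexivity. Qed.

Lemma par_disjoint d1 d2 : inD d1 -> inD d2 -> (forall e, cycle_edge (cyc d1) e -> ~ cycle_edge (cyc d2) e) ->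
  forall s, parC (cyc d1) s = true -> parC (cyc d2) s = true -> False.
Proof. intros H1 H2 Hdis. pose proof (cyc_cycGC d1 H1) as C1. pose proof (cyc_cycGC d2 H2) as C2.
  apply (walk_right (fun s => parC (cyc d1) s = true -> parC (cyc d2) s = true -> False)).
  - intros s Hs P1 _. rewrite OV_parC in P1; auto. discriminate. apply OV_far; auto.
  - intros s Hs IH P1 P2. destruct (classic (cycle_edge (cyc d1) (redge s))) as [E1|E1].
    + pose proof (Hdis _ E1) as E2. apply cyc_edge_dart in E1; auto. destruct E1 as [t Et].
      rewrite Et in E2. destruct (sides_par0 d2 (it t d1) H2 (it_D t d1 H1) E2) as [Q1 Q2].
      pose proof (proj1 (redge_sides s)) as S1. rewrite Et in S1. apply side_ed in S1.
      destruct S1 as [S1|S1]; rewrite S1 in P2; congruence.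
    + destruct (classic (cycle_edge (cyc d2) (redge s))) as [E2|E2].
      * assert (E1' : ~ cycle_edge (cyc d1) (redge s)) by auto.
        apply cyc_edge_dart in E2; auto. destruct E2 as [t Et].
        rewrite Et in E1'. destruct (sides_par0 d1 (it t d2) H1 (it_D t d2 H2) E1') as [Q1 Q2].
        pose proof (proj1 (redge_sides s)) as S1. rewrite Et in S1. apply side_ed in S1.
        destruct S1 as [S1|S1]; rewrite S1 in P1; congruence.
      * apply IH; rewrite par_step_right; auto.
Qed.

Lemma exit_right a : ~ OV a -> exists d, inD d /\ parC (cyc d) a = true.
Proof. revert a. apply (walk_right (fun a => ~ OV a -> exists d, inD d /\ parC (cyc d) a = true)).
  - intros s Hs H; exfalso; apply H, OV_far; auto.
  - intros s Hs IH Hn. destruct (classic (OV (rsq1 s))) as [Ht|Ht].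
    + assert (Hs0 : C0 occ s). { apply NNPP; intro Q. apply Hn. apply (OVs _ (rsq1 s)); auto.
        unfold padj, rsq1; simpl; lia. }
      set (dd := ((fst s + 1, snd s), DN)).
      assert (L1 : lsq dd = s) by (destruct s; unfold dd, lsq; simpl; f_equal; lia).
      assert (L2 : rsq dd = rsq1 s) by (destruct s; unfold dd, rsq, rsq1; simpl; f_equal; lia).
      assert (HD : inD dd) by (unfold inD; rewrite L1, L2; auto).
      exists dd; split; auto. rewrite <- L1. apply (cyc_par_lsq dd 0 HD).
    + destruct (IH Ht) as [d [HD Hp]]. exists d; split; auto. rewrite <- par_step_right; auto.
      apply cyc_cycGC; auto. intro E. apply cyc_edge_OV in E; auto. destruct E as [c [Hc1 Hc2]].
      pose proof (redge_sides s) as [S1 S2]. apply side_of_iff in Hc1, S1, S2.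
      destruct Hc1 as [->| ->]; destruct S1 as [S1|S1]; destruct S2 as [S2|S2];
        try (rewrite <- S1 in Hc2; contradiction); try (rewrite <- S2 in Hc2; contradiction).
      all: rewrite <- S1 in S2; unfold rsq1 in S2; destruct s; simpl in S2; pinj; lia.
Qed.

Lemma interior_iff d x : inD d -> (in_interior (cyc d) x <-> off_cycle (cyc d) x /\ parC (cyc d) (rep x) = true).
Proof. intro HD. pose proof (cyc_cycGC d HD) as HC. split.
  - intros [H1 H2]. split; auto. destruct (parC (cyc d) (rep x)) eqn:E; auto. exfalso.
    apply (par0_infinite d (rep x) HD E). destruct H2 as [l Hl]. exists l. intros y Hy. apply Hl.
    apply rt_trans with (Sq (rep x)); auto. apply rep_comp; auto.
  - intros [H1 H2]. split; auto. apply comp_finite; auto. Qed.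
Lemma exterior_of_OV C s : cycGC C -> OV s -> in_exterior C (Sq s).
Proof. intros HC H. split. exact I. apply comp_infinite; auto. Qed.

Lemma ed_w_inj w a b : ed (w,a) = ed (w,b) -> a = b.
Proof. intro H. destruct (ed_eq _ _ H) as [E|E]. injection E; auto.
  exfalso. apply (f_equal src) in E. rewrite src_rev in E. apply (src_tgt_neq (w,b)); auto. Qed.
Lemma joinsb_w w o d : joinsb (ed (w,o)) (src d) (tgt d) = true <-> ed (w,o) = ed d.
Proof. apply joinsb_dart. Qed.
Definition flw g L w (o : dir) := Z.odd (ec g L (ed (w,o))).
Lemma local_rel g L w : gwalk g L -> closedw g L ->
  par g L (sNW w) = xorb (par g L (sNE w)) (flw g L w DN) /\
  par g L (sSW w) = xorb (par g L (sNW w)) (flw g L w DW) /\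
  par g L (sSE w) = xorb (par g L (sSW w)) (flw g L w DS) /\
  xorb (par g L (sSE w)) (par g L (sNE w)) = flw g L w DE.
Proof. intros Hw Hc. unfold flw.
  pose proof (par_edge g L (ed (w,DN)) Hw Hc) as P1. pose proof (par_edge g L (ed (w,DW)) Hw Hc) as P2.
  pose proof (par_edge g L (ed (w,DS)) Hw Hc) as P3. pose proof (par_edge g L (ed (w,DE)) Hw Hc) as P4.
  unfold sqA, sqB, ed in P1, P2, P3, P4; simpl in P1, P2, P3, P4. unfold sNE, sNW, sSW, sSE, ed; simpl.
  destruct (par g L w), (par g L (fst w - 1, snd w)), (par g L (fst w - 1, snd w - 1)),
    (par g L (fst w, snd w - 1)), (Z.odd (ec g L (w,false))), (Z.odd (ec g L ((fst w - 1, snd w), true))),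
    (Z.odd (ec g L ((fst w, snd w - 1), false))), (Z.odd (ec g L (w,true))); simpl in *; try discriminate; auto. Qed.
Lemma sook1_ok g L s : gcw g L -> closedw g L -> sook1 (st s) (par g L s) = true.
Proof. intros H1 H2. unfold sook1. destruct (st s) eqn:E; auto. simpl. rewrite OV_par0; auto. apply st_SO; auto. Qed.
Lemma local_ok g L w : gcw g L -> closedw g L ->
  consis (par g L (sNE w)) (flw g L w) = true /\ sook (locw w) (par g L (sNE w)) (flw g L w) = true.
Proof. intros H1 H2. destruct (local_rel g L w (gcw_gwalk _ _ H1) H2) as [R1 [R2 [R3 R4]]].
  unfold consis, sook, pars, locw. rewrite <- R1, <- R2, <- R3, R4. split.
  - destruct (flw g L w DE); reflexivity.
  - rewrite !sook1_ok; auto. Qed.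
Lemma consis_ext p f f' : (forall o, f o = f' o) -> consis p f = consis p f'.
Proof. intro H; unfold consis, pars; rewrite !H; reflexivity. Qed.
Lemma sook_ext l p f f' : (forall o, f o = f' o) -> sook l p f = sook l p f'.
Proof. intro H; unfold sook, pars; rewrite !H; reflexivity. Qed.

Lemma sumN_first f n : sumN f (S n) = f O + sumN (fun t => f (S t)) n.
Proof. induction n; simpl in *; lia. Qed.
Lemma sumN_two_ends f L : (2 <= L)%nat -> (forall t, (0 < t)%nat -> (t < L - 1)%nat -> f t = 0) -> sumN f L = f O + f (L-1)%nat.
Proof. intros H1 H2. destruct L as [|[|k]]; try lia. rewrite sumN_first. simpl.
  rewrite sumN_zero. replace (k - 0)%nat with k by lia; lia. intros t Ht; apply H2; lia. Qed.
Lemma ec_w_once g L w e : (2 <= L)%nat -> g O = w -> g L = w -> (forall t, (0 < t < L)%nat -> g t <> w) ->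
  (w = fst (ends e) \/ w = snd (ends e)) ->
  ec g L e = (if joinsb e (g O) (g 1%nat) then 1 else 0) + (if joinsb e (g (L-1)%nat) (g L) then 1 else 0).
Proof. intros HL H0 HLw Hn He. unfold ec, cnt. rewrite sumN_two_ends; auto.
  - replace (S (L-1)) with L by lia; reflexivity.
  - intros t Ht1 Ht2. destruct (joinsb e (g t) (g (S t))) eqn:E; auto. exfalso.
    apply (reflect_iff _ _ (joinsb_spec _ _ _)) in E. pose proof (Hn t ltac:(lia)). pose proof (Hn (S t) ltac:(lia)).
    destruct E as [[E1 E2]|[E1 E2]]; destruct He as [He|He]; congruence. Qed.

Lemma b2_dir w o d o' : d = (w,o') \/ d = drev (w,o') ->
  (if joinsb (ed (w,o)) (src d) (tgt d) then 1 else 0) = (if dir_eqb o o' then 1 else 0).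
Proof. intro Hd. destruct (joinsb _ _ _) eqn:E; destruct (dir_eqb_spec o o'); auto.
  - apply joinsb_w in E. exfalso; apply n. apply (ed_w_inj w). destruct Hd as [->| ->]; auto. rewrite ed_rev in E; auto.
  - subst. exfalso. assert (joinsb (ed (w,o')) (src d) (tgt d) = true); [|congruence].
    apply joinsb_w. destruct Hd as [->| ->]; auto. rewrite ed_rev; auto. Qed.
Lemma odd_b2 (a b : bool) : Z.odd ((if a then 1 else 0) + (if b then 1 else 0)) = xorb a b.
Proof. destruct a, b; reflexivity. Qed.

Lemma pinch_contra g L (dl : nat -> dart) d1 :
  (2 <= L)%nat ->
  (forall t, (t < L)%nat -> inD (dl t) /\ src (dl t) = g t /\ tgt (dl t) = g (S t)) ->
  g L = g O ->
  (forall t, (0 < t < L)%nat -> g t <> g O) ->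
  inD d1 -> succ d1 = dl O -> d1 <> dl (L-1)%nat -> False.
Proof. intros HL Hdl Hc Hn HD1 Hs Hne. set (w := g O).
  assert (Hg : gcw g L). { intros t Ht. destruct (Hdl t Ht) as [H1 [H2 H3]]. exists (ed (dl t)). split.
    - apply GC_iff. destruct (lsq_rsq_AB (dl t)) as [[<- _]|[<- _]]; [left|right]; apply H1.
    - rewrite <- H2, <- H3. apply ed_joins. }
  destruct (Hdl O ltac:(lia)) as [D0 [S0 T0]]. destruct (Hdl (L-1)%nat ltac:(lia)) as [DL [SL TL]].
  replace (S (L-1)) with L in TL by lia.
  assert (Tw1 : tgt d1 = w). { rewrite <- src_succ, Hs; auto. }
  assert (TwL : tgt (dl (L-1)%nat) = w). { rewrite TL; auto. }
  set (a1 := snd d1). set (a2 := snd (dl (L-1)%nat)). set (l := locw w).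
  assert (E1 : d1 = drev (w, opp a1)) by (rewrite <- Tw1; apply tgt_in; auto).
  assert (E2 : dl (L-1)%nat = drev (w, opp a2)) by (rewrite <- TwL; apply tgt_in; auto).
  assert (E0 : dl O = (w, succl l a1)). { rewrite <- Hs, succ_loc, Tw1; auto. }
  assert (Hfl : forall o, flw g L w o = xorb (dir_eqb o (opp a2)) (dir_eqb o (succl l a1))).
  { intro o. unfold flw. rewrite (ec_w_once g L w); auto.
    - rewrite <- S0, <- T0, <- SL. replace (g L) with (tgt (dl (L-1)%nat)) by auto.
      rewrite (b2_dir w o (dl O) (succl l a1)) by auto. rewrite (b2_dir w o (dl (L-1)%nat) (opp a2)) by auto.
      rewrite odd_b2. destruct (dir_eqb o (opp a2)), (dir_eqb o (succl l a1)); reflexivity.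
    - unfold ed; destruct o; simpl; [left|left|right|right]; try reflexivity; apply injective_projections; simpl; lia. }
  destruct (local_ok g L w Hg Hc) as [K1 K2].
  rewrite (consis_ext _ _ _ Hfl) in K1. rewrite (sook_ext _ _ _ _ Hfl) in K2.
  pose proof (LP l a1 a2 (par g L (sNE w))) as K. cbv zeta in K.
  assert (V : validl l = true) by apply validw.
  assert (I1 : inDl l a1 = true) by (unfold l; rewrite <- Tw1; apply inDl_iff; auto).
  assert (I2 : inDl l a2 = true) by (unfold l; rewrite <- TwL; apply inDl_iff; auto).
  assert (N : dir_eqb a1 a2 = false). { destruct (dir_eqb_spec a1 a2); auto. exfalso; apply Hne.
    rewrite E1, E2; rewrite e; auto. }
  fold l in K2. rewrite V, I1, I2, N, K1, K2 in K. simpl in K. discriminate.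
Qed.

Lemma it_per_add d i : inD d -> it (i + per d) d = it i d.
Proof. intro HD; rewrite it_add, it_per; auto. Qed.
Lemma src_it_inj_lt d : inD d -> forall k i j, (j - i = k)%nat -> (i < j)%nat -> (j < per d)%nat ->
  src (it i d) = src (it j d) -> False.
Proof. intros HD k. induction k as [k IH] using (well_founded_induction lt_wf). intros i j Hk Hij Hj Hs.
  destruct (classic (exists t, (i < t < j)%nat /\ src (it t d) = src (it i d))) as [[t [Ht Et]]|Hno].
  { apply (IH (t - i)%nat ltac:(lia) i t); auto; lia. }
  destruct (Nat.eq_dec (j - i) 1) as [E1|E1].
  { replace j with (S i) in Hs by lia. rewrite src_it_S in Hs. apply (src_tgt_neq (it i d)); auto. }
  apply (pinch_contra (fun t => src (it (i + t) d)) (j - i) (fun t => it (i + t) d) (it (i + per d - 1) d)).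
  - lia.
  - intros t Ht. split; [apply it_D; auto|]. split; auto. rewrite <- src_it_S. f_equal. f_equal. lia.
  - simpl. rewrite Nat.add_0_r. replace (i + (j - i))%nat with j by lia. auto.
  - intros t Ht E. simpl in E. rewrite Nat.add_0_r in E. apply Hno. exists (i + t)%nat; split; auto. lia.
  - apply it_D; auto.
  - rewrite <- it_S. rewrite Nat.add_0_r. replace (S (i + per d - 1)) with (i + per d)%nat by (pose proof (per_pos d); lia).
    apply it_per_add; auto.
  - intro E. apply (f_equal succ) in E. rewrite <- !it_S in E.
    replace (S (i + per d - 1)) with (i + per d)%nat in E by (pose proof (per_pos d); lia).
    replace (S (i + (j - i - 1))) with j in E by lia. rewrite it_per_add in E by auto.
    apply it_distinct in E; auto; lia.
Qed.
Lemma src_it_inj d i j : inD d -> (i < per d)%nat -> (j < per d)%nat -> src (it i d) = src (it j d) -> i = j.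
Proof. intros HD Hi Hj E. destruct (Nat.lt_total i j) as [H|[H|H]]; auto; exfalso.
  - apply (src_it_inj_lt d HD (j - i) i j); auto.
  - apply (src_it_inj_lt d HD (i - j) j i); auto. Qed.
Lemma src_it_mod d m n : inD d -> src (it m d) = src (it n d) -> (m mod per d = n mod per d)%nat.
Proof. intros HD E. pose proof (per_pos d). rewrite (it_mod d m), (it_mod d n) in E by auto.
  apply src_it_inj in E; auto; apply Nat.mod_upper_bound; lia. Qed.

Lemma per_ge3 d : inD d -> (3 <= per d)%nat.
Proof. intro HD. pose proof (per_pos d). destruct (per d) as [|[|[|p]]] eqn:E; try lia; exfalso.
  - pose proof (it_per d HD) as P. rewrite E in P. apply (f_equal src) in P. rewrite src_it_S in P.
    apply (src_tgt_neq d); auto.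
  - pose proof (it_per d HD) as P. rewrite E in P.
    assert (Q : succ d = drev d). { apply dart_ends.
      rewrite src_succ, src_rev; auto. rewrite tgt_rev. rewrite <- src_succ. rewrite <- P at 2. reflexivity. }
    apply (inD_not_rev d HD). rewrite <- Q. apply succ_D; auto. Qed.
Lemma nth_cyc d i : (i < per d)%nat -> nth i (cyc d) origin = src (it i d).
Proof. intro H; unfold cyc; rewrite nth_map_seq; auto. Qed.
Lemma cyc_is_cycle d : inD d -> is_cycle occ (cyc d).
Proof. intro HD. split; [rewrite length_cyc; apply per_ge3; auto|]. split.
  - apply (NoDup_nth (cyc d) origin). rewrite length_cyc. intros i j Hi Hj E. rewrite !nth_cyc in E by auto.
    apply src_it_inj in E; auto.
  - intros i Hi. rewrite length_cyc in Hi. exists (ed (it i d)). split.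
    + apply GC_iff. destruct (lsq_rsq_AB (it i d)) as [[<- _]|[<- _]]; [left|right]; apply (it_D i d HD).
    + rewrite gC_nxt, gC_cyc, nth_cyc, src_it_S by auto. apply ed_joins.
Qed.

Lemma orbit_shift r a b : inD r -> it (b + a * (per r - 1)) (it a r) = it b r.
Proof. intro HD. rewrite it_it. pose proof (per_pos r).
  replace (b + a * (per r - 1) + a)%nat with (b + a * per r)%nat by (destruct (per r); [lia|]; nia).
  rewrite it_add, (it_mult r a HD); auto. Qed.

Lemma shared_vertex x y : inD x -> inD y -> (forall m n, it m x <> it n y) -> src x = src y ->
  forall n m, src (it n x) = src (it m y) -> src (it n x) = src x.
Proof. intros Hx Hy Hdis Hxy n0 m0 E0. apply NNPP; intro Hne.
  pose proof (per_pos x) as Px. pose proof (per_pos y) as Py.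
  set (n := (n0 mod per x)%nat). set (m := (m0 mod per y)%nat).
  assert (Hn : (n < per x)%nat) by (apply Nat.mod_upper_bound; lia).
  assert (Hm : (m < per y)%nat) by (apply Nat.mod_upper_bound; lia).
  assert (En : it n0 x = it n x) by (apply it_mod; auto). assert (Em : it m0 y = it m y) by (apply it_mod; auto).
  rewrite En, Em in E0. rewrite En in Hne.
  assert (n <> 0%nat) by (intro Q; rewrite Q in Hne; apply Hne; reflexivity).
  assert (m <> 0%nat) by (intro Q; rewrite Q in E0; apply Hne; rewrite E0; auto).
  set (L := (n + (per y - m))%nat).
  set (dl := fun t => if (t <? n)%nat then it t x else it (m + (t - n)) y).
  set (g := fun t => if (t <? n)%nat then src (it t x) else src (it (m + (t - n)) y)).
  apply (pinch_contra g L dl (it (per x - 1) x)).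
  - unfold L; lia.
  - intros t Ht. unfold dl, g. destruct (Nat.ltb_spec t n); [split; [apply it_D; auto|split; auto]|].
    + destruct (Nat.ltb_spec (S t) n). rewrite src_it_S; auto.
      replace t with (n - 1)%nat by lia. rewrite <- src_it_S. replace (S (n - 1)) with n by lia.
      rewrite Nat.sub_diag, Nat.add_0_r; auto.
    + split; [apply it_D; auto|]. split; auto. destruct (Nat.ltb_spec (S t) n); [lia|].
      rewrite <- src_it_S. f_equal; f_equal; lia.
  - unfold g, L. destruct (Nat.ltb_spec (n + (per y - m)) n); [lia|]. destruct (Nat.ltb_spec 0 n); [|lia].
    replace (m + (n + (per y - m) - n))%nat with (per y) by lia. rewrite it_per; auto.
  - intros t Ht. unfold g. destruct (Nat.ltb_spec 0 n); [|lia]. simpl. destruct (Nat.ltb_spec t n).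
    + intro E. apply (src_it_inj x t 0) in E; auto; lia.
    + intro E. rewrite Hxy in E. change (src y) with (src (it 0 y)) in E. apply (src_it_inj y) in E; auto; unfold L in Ht; lia.
  - apply it_D; auto.
  - unfold dl. destruct (Nat.ltb_spec 0 n); [|lia]. rewrite <- it_S. replace (S (per x - 1)) with (per x) by lia.
    apply it_per; auto.
  - unfold dl. destruct (Nat.ltb_spec (L - 1) n); [unfold L in *; lia|]. apply Hdis.
Qed.

Lemma orbit_back d n : inD d -> it (n * (per d - 1)) (it n d) = d.
Proof. intro HD. pose proof (orbit_shift d n 0 HD) as H. simpl in H. auto. Qed.
Lemma per_it d n : inD d -> per (it n d) = per d.
Proof. intro HD. pose proof (per_pos d). pose proof (per_pos (it n d)). apply Nat.le_antisymm.
  - apply per_min; [apply it_D; auto| lia |]. rewrite it_it, Nat.add_comm, it_per_add; auto.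
  - apply per_min; auto. set (x := it n d). set (k := (n * (per d - 1))%nat).
    assert (Ex : it k x = d) by (apply orbit_back; auto).
    assert (Dx : inD x) by (apply it_D; auto).
    rewrite <- Ex at 1. rewrite it_it, Nat.add_comm, <- it_it, it_per; auto. Qed.
Lemma sumN_periodic (F : nat -> Z) p n : (forall t, F (t + p)%nat = F t) -> sumN (fun t => F (n + t)%nat) p = sumN F p.
Proof. intro HF. induction n; [reflexivity|].
  rewrite <- IHn. transitivity (sumN (fun t => F (n + S t)%nat) p).
  { apply sumN_ext; intros; f_equal; lia. }
  rewrite (sumN_shift (fun t' => F (n + t')%nat)). rewrite HF, Nat.add_0_r. lia. Qed.
Lemma cnt_cyc_it d n p : inD d ->
  cnt (gC (cyc (it n d))) (length (cyc (it n d))) p = cnt (gC (cyc d)) (length (cyc d)) p.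
Proof. intro HD. unfold cnt. rewrite !length_cyc, per_it by auto.
  set (F := fun t => if p (src (it t d)) (src (it (S t) d)) then 1 else 0).
  transitivity (sumN (fun t => F (n + t)%nat) (per d)).
  - apply sumN_ext; intros t Ht. rewrite !gC_cyc by (try apply it_D; auto). unfold F.
    rewrite !it_it. replace (t + n)%nat with (n + t)%nat by lia. replace (S t + n)%nat with (S (n + t)) by lia. auto.
  - rewrite sumN_periodic. apply sumN_ext; intros t Ht. rewrite !gC_cyc by auto. auto.
    intro t. unfold F. rewrite !(it_mod d (t + per d)), !(it_mod d (S (t + per d))), (it_mod d t), (it_mod d (S t)) by auto.
    replace (S (t + per d)) with (S t + 1 * per d)%nat by lia. replace (t + per d)%nat with (t + 1 * per d)%nat by lia.
    rewrite !Nat.Div0.mod_add. auto. Qed.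
Lemma parC_it d n s : inD d -> parC (cyc (it n d)) s = parC (cyc d) s.
Proof. intro HD; unfold parC, par; rewrite cnt_cyc_it; auto. Qed.
Lemma cyc_edge_any d e : inD d -> (cycle_edge (cyc d) e <-> exists t, e = ed (it t d)).
Proof. intro HD; split. apply cyc_edge_dart; auto. intros [t ->]; apply cyc_edge_of; auto. Qed.
Lemma In_cyc d v : inD d -> (In v (cyc d) <-> exists t, v = src (it t d)).
Proof. intro HD. split.
  - intro H. apply in_gC in H; destruct H as [t [_ <-]]. rewrite gC_cyc; eauto.
  - intros [t ->]. rewrite <- gC_cyc by auto. apply gC_in. rewrite length_cyc; apply per_pos. Qed.
Lemma cyc_edge_it d n e : inD d -> (cycle_edge (cyc (it n d)) e <-> cycle_edge (cyc d) e).
Proof. intro HD. rewrite !cyc_edge_any by (try apply it_D; auto). split.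
  - intros [t ->]. rewrite it_it; eauto.
  - intros [t ->]. exists (t + n * (per d - 1))%nat. rewrite <- it_it, orbit_back; auto. Qed.
Lemma In_cyc_it d n v : inD d -> (In v (cyc (it n d)) <-> In v (cyc d)).
Proof. intro HD. rewrite !In_cyc by (try apply it_D; auto). split.
  - intros [t ->]. rewrite it_it; eauto.
  - intros [t ->]. exists (t + n * (per d - 1))%nat. rewrite <- it_it, orbit_back; auto. Qed.
Lemma off_it d n x : inD d -> (off_cycle (cyc (it n d)) x <-> off_cycle (cyc d) x).
Proof. intro HD. destruct x; simpl; auto; try tauto. rewrite cyc_edge_it; tauto. rewrite In_cyc_it; tauto. Qed.
Lemma interior_it d n x : inD d -> (in_interior (cyc (it n d)) x <-> in_interior (cyc d) x).
Proof. intro HD. rewrite !interior_iff by (try apply it_D; auto). rewrite off_it, parC_it; tauto. Qed.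

Fixpoint pos (l : list dart) (d : dart) : nat :=
  match l with [] => O | x :: t => if dart_eq_dec x d then O else S (pos t d) end.
Lemma pos_inj l d d' : In d l -> In d' l -> pos l d = pos l d' -> d = d'.
Proof. induction l as [|x l IH]; simpl; [tauto|]. intros H1 H2 E.
  destruct (dart_eq_dec x d), (dart_eq_dec x d'); subst; auto; try discriminate.
  destruct H1; [contradiction|]. destruct H2; [contradiction|]. apply IH; auto. Qed.
Definition idx d := pos DLall d.
Definition isrep (d : dart) := inD d /\ forall n, (idx d <= idx (it n d))%nat.
Lemma rep_ex d : inD d -> exists r, isrep r /\ exists n, r = it n d.
Proof. intro HD. set (P := fun v => exists n, idx (it n d) = v).
  destruct (Wf_nat.dec_inh_nat_subset_has_unique_least_element P (fun n => classic _) (ex_intro _ _ (ex_intro _ O eq_refl)))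
    as [v [[[n0 Hn0] Hmin] _]].
  exists (it n0 d). split; [split|eauto]. apply it_D; auto. intros n. rewrite Hn0, it_it. apply Hmin. eexists; eauto. Qed.
Lemma rep_uniq r1 r2 n : isrep r1 -> isrep r2 -> r2 = it n r1 -> r1 = r2.
Proof. intros [D1 H1] [D2 H2] E. apply (pos_inj DLall); try apply In_DLall; auto.
  apply Nat.le_antisymm. unfold idx in *. rewrite E; apply H1. rewrite <- (orbit_back r1 n D1), <- E. apply H2. Qed.
Lemma reps_disjoint r1 r2 m n : isrep r1 -> isrep r2 -> it m r1 = it n r2 -> r1 = r2.
Proof. intros H1 H2 E. apply (rep_uniq r1 r2 (n * (per r2 - 1) + m)); auto.
  rewrite <- it_it, E, orbit_back; auto. apply H2. Qed.
Lemma orbit_rep d : inD d -> exists r, isrep r /\ exists n, d = it n r.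
Proof. intro HD. destruct (rep_ex d HD) as [r [Hr [n ->]]]. exists (it n d); split; auto.
  exists (n * (per d - 1))%nat. rewrite orbit_back; auto. Qed.
Definition Rl : list dart := filter (fun d => dec (isrep d)) DLall.
Lemma In_Rl r : In r Rl <-> isrep r.
Proof. unfold Rl. rewrite filter_In, decP, In_DLall. unfold isrep; tauto. Qed.
Lemma NoDup_Rl : NoDup Rl.
Proof. apply NoDup_filter, NoDup_DLall. Qed.
Definition Cs : list (list pt) := map cyc Rl.
Lemma In_Cs C : In C Cs <-> exists r, isrep r /\ C = cyc r.
Proof. unfold Cs. rewrite in_map_iff. split; intros [r [H1 H2]]; exists r; rewrite In_Rl in *; auto. Qed.

Definition bdD (e : edge) := exists d, inD d /\ ed d = e.
Lemma lsq_neq_rsq d : lsq d <> rsq d.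
Proof. destruct (lsq_rsq_star d); auto. Qed.
Lemma edge_to_dart e a o : side_of e a -> side_of e o -> a <> o -> exists d, ed d = e /\ lsq d = a /\ rsq d = o.
Proof. intros Ha Ho Hne. destruct (edge_dart e) as [d0 <-].
  apply side_ed in Ha; apply side_ed in Ho.
  destruct Ha as [Ha|Ha]; destruct Ho as [Ho|Ho]; subst; try (exfalso; apply Hne; reflexivity).
  - exists d0; auto.
  - exists (drev d0); rewrite ed_rev, lsq_rev, rsq_rev; auto. Qed.
Lemma C0_OV_neq a o : C0 occ a -> OV o -> a <> o.
Proof. intros H1 H2 ->. apply OV_nC0 in H2; contradiction. Qed.
Lemma bdD_outer e : bdD e -> outer_boundary occ e.
Proof. intros [d [HD <-]]. split.
  - apply GC_iff. destruct (lsq_rsq_AB d) as [[<- _]|[<- _]]; [left|right]; apply HD.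
  - intros C HC. destruct (classic (cycle_edge C (ed d))) as [E|E]; [left; auto|right].
    split; auto. intros Hf. apply (comp_infinite C (rsq d)); [apply is_cycle_GC; auto| apply HD|].
    destruct Hf as [l Hl]. exists l. intros y Hy. apply Hl. apply rt_trans with (Sq (rsq d)); auto.
    apply rt_step; repeat split; simpl; auto. apply side_rsq. Qed.
Lemma outer_bdD e : outer_boundary occ e -> bdD e.
Proof. intros [HG Hall]. apply GC_iff in HG.
  assert (Hsides : forall c, side_of e c -> C0 occ c -> (OV (sqA e) \/ OV (sqB e)) -> bdD e).
  { intros c Hc HC0 HO. assert (Ho : exists o, side_of e o /\ OV o) by (destruct HO; eauto using side_A, side_B).
    destruct Ho as [o [Ho1 Ho2]]. destruct (edge_to_dart e c o Hc Ho1 (C0_OV_neq c o HC0 Ho2)) as [d [E1 [E2 E3]]].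
    exists d; split; auto. unfold inD; rewrite E2, E3; auto. }
  destruct (classic (OV (sqA e) \/ OV (sqB e))) as [HO|HO].
  { destruct HG as [HG|HG]; [apply (Hsides (sqA e)) | apply (Hsides (sqB e))]; auto using side_A, side_B. }
  exfalso. assert (Ha : exists a, side_of e a /\ C0 occ a) by (destruct HG; eauto using side_A, side_B).
  destruct Ha as [a [Ha1 Ha2]].
  destruct (exit_right a) as [d [HD Hp]]. { intro Q; apply OV_nC0 in Q; contradiction. }
  assert (HC := cyc_cycGC d HD).
  assert (Hne : ~ cycle_edge (cyc d) e).
  { intro Q. apply cyc_edge_OV in Q; auto. destruct Q as [c [Q1 Q2]]. apply side_of_iff in Q1.
    apply HO; destruct Q1; subst; auto. }
  destruct (Hall (cyc d) (cyc_is_cycle d HD)) as [Q|[_ Q]]; [contradiction|].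
  apply Q. apply comp_finite; auto. simpl. change (fst e) with (sqA e).
  apply side_of_iff in Ha1. destruct Ha1 as [-> | ->]; auto. rewrite parC_off; auto. Qed.
Lemma outer_iff e : outer_boundary occ e <-> bdD e.
Proof. split; [apply outer_bdD|apply bdD_outer]. Qed.
Lemma union_iff e : union_edge Cs e <-> bdD e.
Proof. split.
  - intros [C [HC He]]. apply In_Cs in HC. destruct HC as [r [Hr ->]]. apply cyc_edge_dart in He; [|apply Hr].
    destruct He as [t ->]. exists (it t r); split; auto. apply it_D, Hr.
  - intros [d [HD <-]]. destruct (orbit_rep d HD) as [r [Hr [n ->]]]. exists (cyc r). split.
    apply In_Cs; eauto. apply cyc_edge_of, Hr. Qed.

Lemma prop_iii k : C0 occ k -> exists C, In C Cs /\ in_interior C (Sq k).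
Proof. intro Hk. destruct (exit_right k) as [d [HD Hp]]. { intro Q; apply OV_nC0 in Q; contradiction. }
  destruct (orbit_rep d HD) as [r [Hr [n ->]]]. exists (cyc r). split. apply In_Cs; eauto.
  rewrite <- (interior_it r n) by apply Hr. apply interior_iff; auto. split; simpl; auto. Qed.
Lemma rsq_vacant d : inD d -> ~ occ (rsq d).
Proof. intros [H1 H2] Ho. apply OV_nC0 in H2. apply H2. apply (C0_star (lsq d)); auto. apply lsq_rsq_star. Qed.
Lemma prop_iv C e : In C Cs -> cycle_edge C e ->
     boundary_edge occ e /\
     (exists c, side_of e c /\ C0 occ c /\ in_interior C (Sq c)) /\
     (exists c, side_of e c /\ ~ occ c /\ in_exterior C (Sq c)).
Proof. intros HC He. apply In_Cs in HC. destruct HC as [r [Hr ->]]. destruct Hr as [HD _].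
  pose proof He as He'. apply cyc_edge_dart in He; auto. destruct He as [t ->].
  assert (Dt := it_D t r HD). split; [|split].
  - exists (lsq (it t r)), (rsq (it t r)). repeat split; auto using side_lsq, side_rsq.
    apply C0_occ, Dt. apply rsq_vacant; auto.
  - exists (lsq (it t r)). repeat split; auto using side_lsq. apply Dt. apply interior_iff; auto.
    split; simpl; auto. apply cyc_par_lsq; auto.
  - exists (rsq (it t r)). repeat split; auto using side_rsq. apply rsq_vacant; auto.
    apply exterior_of_OV. apply cyc_cycGC; auto. apply Dt. Qed.

Lemma reps_edge_disj r1 r2 : isrep r1 -> isrep r2 -> r1 <> r2 ->
  forall e, cycle_edge (cyc r1) e -> ~ cycle_edge (cyc r2) e.
Proof. intros H1 H2 Hne e E1 E2. apply cyc_edge_dart in E1; [|apply H1]. apply cyc_edge_dart in E2; [|apply H2].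
  destruct E1 as [t1 ->], E2 as [t2 E]. apply inD_ed_inj in E; try apply it_D; try apply H1; try apply H2.
  apply Hne. eapply reps_disjoint; eauto. Qed.
Lemma prop_ii_a r1 r2 x : isrep r1 -> isrep r2 -> r1 <> r2 ->
  ~ (in_interior (cyc r1) x /\ in_interior (cyc r2) x).
Proof. intros H1 H2 Hne [I1 I2]. apply interior_iff in I1; [|apply H1]. apply interior_iff in I2; [|apply H2].
  apply (par_disjoint r1 r2 (proj1 H1) (proj1 H2) (reps_edge_disj r1 r2 H1 H2 Hne) (rep x)); tauto. Qed.
Lemma prop_ii_b r1 r2 u v : isrep r1 -> isrep r2 -> r1 <> r2 ->
  In u (cyc r1) -> In u (cyc r2) -> In v (cyc r1) -> In v (cyc r2) -> u = v.
Proof. intros [D1 H1] [D2 H2] Hne U1 U2 V1 V2.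
  apply In_cyc in U1, U2, V1, V2; auto. destruct U1 as [a Ea], U2 as [a' Ea'], V1 as [b Eb], V2 as [b' Eb'].
  set (x := it a r1). set (y := it a' r2).
  assert (Hdis : forall m n, it m x <> it n y).
  { intros m n E. unfold x, y in E. rewrite !it_it in E. apply Hne.
    apply (reps_disjoint r1 r2 (m+a) (n+a')); [split; auto | split; auto | exact E]. }
  pose proof (shared_vertex x y (it_D a r1 D1) (it_D a' r2 D2) Hdis ltac:(unfold x, y; congruence)
     (b + a * (per r1 - 1)) (b' + a' * (per r2 - 1))) as S.
  unfold x, y in S. rewrite !orbit_shift in S by auto. rewrite Ea, Eb. symmetry. apply S. congruence. Qed.

Definition owns r c := isrep r /\ parC (cyc r) c = true.
Lemma owner_ex c : C0 occ c -> exists r, owns r c.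
Proof. intro Hc. destruct (exit_right c) as [d [HD Hp]]. { intro Q; apply OV_nC0 in Q; contradiction. }
  destruct (orbit_rep d HD) as [r [Hr [n ->]]]. exists r; split; auto. rewrite <- (parC_it r n); auto. apply Hr. Qed.
Lemma owner_uniq r1 r2 c : owns r1 c -> owns r2 c -> r1 = r2.
Proof. intros [H1 P1] [H2 P2]. apply NNPP; intro Hne.
  apply (par_disjoint r1 r2 (proj1 H1) (proj1 H2) (reps_edge_disj r1 r2 H1 H2 Hne) c); auto. Qed.
Lemma par_through r c c' e : isrep r -> side_of e c -> side_of e c' -> ~ OV c -> ~ OV c' ->
  parC (cyc r) c = parC (cyc r) c'.
Proof. intros Hr H1 H2 O1 O2. destruct (classic (c = c')) as [->|Hne]; auto.
  assert (Hnc : ~ cycle_edge (cyc r) e).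
  { intro Q. apply cyc_edge_OV in Q; [|apply Hr]. destruct Q as [z [Q1 Q2]].
    apply side_of_iff in Q1, H1, H2. destruct Q1, H1, H2; subst; try congruence. }
  pose proof (parC_off (cyc r) e (cyc_cycGC r (proj1 Hr)) Hnc).
  apply side_of_iff in H1, H2. destruct H1, H2; subst; congruence. Qed.
Definition link r1 r2 := isrep r1 /\ isrep r2 /\ exists v, In v (cyc r1) /\ In v (cyc r2).
Lemma corner_endpoint e s t w : side_of e s -> side_of e t -> s <> t -> corner w s -> corner w t ->
  w = fst (ends e) \/ w = snd (ends e).
Proof. destruct e as [[x y] [|]]; destruct s as [a b], t as [c d], w as [p q]; unfold corner; simpl;
  intros H1 H2 Hne H3 H4;
  destruct H1 as [H1|H1]; destruct H2 as [H2|H2]; pinj; intros; subst;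
  try (exfalso; apply Hne; f_equal; lia);
  destruct H3 as [H3|[H3|[H3|H3]]]; destruct H4 as [H4|[H4|[H4|H4]]]; pinj; intros; subst;
  try (exfalso; lia); first [left; f_equal; lia | right; f_equal; lia]. Qed.
Lemma dart_ends_in r d : isrep r -> (exists n, d = it n r) -> forall w, (w = fst (ends (ed d)) \/ w = snd (ends (ed d))) -> In w (cyc r).
Proof. intros Hr [n ->] w Hw. apply In_cyc; [apply Hr|]. pose proof (ed_joins (it n r)) as J. unfold joins in J.
  assert (w = src (it n r) \/ w = src (it (S n) r)) as [->| ->] by (rewrite src_it_S; destruct J as [[J1 J2]|[J1 J2]]; destruct Hw; subst; auto).
  eauto. eauto. Qed.
Lemma C0_not_OV c : C0 occ c -> ~ OV c.
Proof. intros H1 H2; apply OV_nC0 in H2; contradiction. Qed.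
Lemma star_link a b ra rb : C0 occ a -> C0 occ b -> star_adj a b -> owns ra a -> owns rb b -> ra = rb \/ link ra rb.
Proof. intros Ha Hb Hab Oa Ob. destruct (classic (ra = rb)) as [E|Hne]; [left; auto|right].
  split; [apply Oa|]. split; [apply Ob|].
  destruct (classic (padj a b)) as [P|P].
  - exfalso. destruct (padj_edge a b P) as [e He].
    assert (S1 : side_of e a /\ side_of e b) by (destruct He as [[-> ->]|[-> ->]]; auto using side_A, side_B).
    assert (owns ra b). { split. apply Oa. rewrite <- (par_through ra a b e); try apply Oa; try tauto; apply C0_not_OV; auto. }
    apply Hne; eapply owner_uniq; eauto.
  - destruct a as [a1 a2], b as [b1 b2]. unfold star_adj, padj in *; simpl in *.
    destruct Hab as [Hab [Hx Hy]].
    assert (D1 : Z.abs (a1 - b1) = 1 /\ Z.abs (a2 - b2) = 1).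
    { destruct (Z.eq_dec a1 b1); destruct (Z.eq_dec a2 b2); subst; try (exfalso; apply Hab; reflexivity); try lia. }
    set (X := (b1, a2)).
    assert (PaX : padj (a1,a2) X) by (unfold padj, X; simpl; lia).
    assert (PXb : padj X (b1,b2)) by (unfold padj, X; simpl; lia).
    destruct (padj_edge _ _ PaX) as [e1 He1]. destruct (padj_edge _ _ PXb) as [e2 He2].
    assert (S1 : side_of e1 (a1,a2) /\ side_of e1 X) by (destruct He1 as [[-> ->]|[-> ->]]; auto using side_A, side_B).
    assert (S2 : side_of e2 X /\ side_of e2 (b1,b2)) by (destruct He2 as [[-> ->]|[-> ->]]; auto using side_A, side_B).
    destruct (classic (OV X)) as [OX|OX].
    + assert (NaX : (a1,a2) <> X) by (unfold X; intro Q; pinj; lia).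
      assert (NbX : (b1,b2) <> X) by (unfold X; intro Q; pinj; lia).
      destruct (edge_to_dart e1 (a1,a2) X (proj1 S1) (proj2 S1) NaX) as [da [Ea1 [Ea2 Ea3]]].
      destruct (edge_to_dart e2 (b1,b2) X (proj2 S2) (proj1 S2) NbX) as [db [Eb1 [Eb2 Eb3]]].
      assert (Da : inD da) by (unfold inD; rewrite Ea2, Ea3; auto).
      assert (Db : inD db) by (unfold inD; rewrite Eb2, Eb3; auto).
      destruct (orbit_rep da Da) as [ra' [Hra' [na Ena]]]. destruct (orbit_rep db Db) as [rb' [Hrb' [nb Enb]]].
      assert (ra' = ra). { apply (owner_uniq _ _ (a1,a2)); auto. split; auto. rewrite <- Ea2, Ena.
        apply cyc_par_lsq, Hra'. }
      assert (rb' = rb). { apply (owner_uniq _ _ (b1,b2)); auto. split; auto. rewrite <- Eb2, Enb.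
        apply cyc_par_lsq, Hrb'. }
      subst ra' rb'.
      set (w := (Z.max a1 b1, Z.max a2 b2)).
      assert (Cw : corner w (a1,a2) /\ corner w (b1,b2) /\ corner w X).
      { unfold corner, w, X; simpl. repeat split;
        destruct (Z.abs_spec (a1 - b1)) as [[? ?]|[? ?]]; destruct (Z.abs_spec (a2 - b2)) as [[? ?]|[? ?]];
        first [ left; f_equal; lia | right; left; f_equal; lia | right; right; left; f_equal; lia
              | right; right; right; f_equal; lia ]. }
      exists w. split.
      * apply (dart_ends_in ra da); eauto. rewrite Ea1. apply (corner_endpoint e1 (a1,a2) X); tauto.
      * apply (dart_ends_in rb db); eauto. rewrite Eb1. apply (corner_endpoint e2 X (b1,b2)); try tauto. auto.
    + exfalso. assert (owns ra (b1,b2)).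
      { split. apply Oa. rewrite <- (par_through ra X (b1,b2) e2); try apply Oa; try tauto; try apply C0_not_OV; auto.
        rewrite <- (par_through ra (a1,a2) X e1); try apply Oa; try tauto; try apply C0_not_OV; auto. }
      apply Hne; eapply owner_uniq; eauto.
Qed.

Lemma link_chain r0 : forall l c0, chain star_adj (c0 :: l) -> (forall c, In c (c0 :: l) -> C0 occ c) ->
  (forall r, owns r c0 -> clos_refl_trans _ link r0 r) ->
  forall c, In c (c0 :: l) -> forall r, owns r c -> clos_refl_trans _ link r0 r.
Proof. induction l as [|c1 l IH]; intros c0 Hch HC Hc0 c Hc r Hr.
  - destruct Hc as [<-|[]]; auto.
  - destruct Hc as [<-|Hc]; auto. apply (IH c1) with (c := c); auto.
    + apply (chain_cons_inv _ c0); auto.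
    + intros c' Hc'; apply HC; right; auto.
    + intros r1 Hr1. destruct (owner_ex c0 (HC c0 (or_introl eq_refl))) as [r' Hr'].
      assert (Hs : r' = r1 \/ link r' r1) by (apply (star_link c0 c1); [apply HC; left; auto | apply HC; right; left; auto | apply (proj1 Hch) | exact Hr' | exact Hr1]).
      destruct Hs as [E|E]. subst; auto. apply rt_trans with r'; auto. apply rt_step; auto.
Qed.
Lemma all_linked r0 : owns r0 origin -> forall r, isrep r -> clos_refl_trans _ link r0 r.
Proof. intros H0 r Hr. assert (Hl : C0 occ (lsq r)) by apply Hr.
  destruct Hl as [Y [H1 [H2 [H3 H4]]]].
  apply (link_chain r0 Y origin H3 (fun c Hc => C0_path_elem Y c H1 H2 H3 Hc)) with (c := lsq r).
  - intros r' Hr'. rewrite (owner_uniq r0 r' origin); auto. apply rt_refl.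
  - rewrite <- H4. apply last_in.
  - split; auto. apply (cyc_par_lsq r 0), Hr. Qed.

Definition Erel (u v : pt) := exists e, union_edge Cs e /\ joins e u v.
Lemma Erel_sym u v : Erel u v -> Erel v u.
Proof. intros [e [H1 H2]]; exists e; split; auto. unfold joins in *; tauto. Qed.
Lemma crt_sym {A} (R : A -> A -> Prop) : (forall x y, R x y -> R y x) -> forall x y, clos_refl_trans _ R x y -> clos_refl_trans _ R y x.
Proof. intros HR x y H; induction H; [apply rt_step; auto | apply rt_refl | eapply rt_trans; eauto]. Qed.
Lemma cyc_conn r : isrep r -> forall t, clos_refl_trans _ Erel (src r) (src (it t r)).
Proof. intros Hr t; induction t; [apply rt_refl|]. apply rt_trans with (src (it t r)); auto.
  apply rt_step. exists (ed (it t r)). split. apply union_iff. exists (it t r); split; auto. apply it_D, Hr.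
  rewrite src_it_S; apply ed_joins. Qed.
Lemma cyc_conn2 r u : isrep r -> In u (cyc r) -> clos_refl_trans _ Erel (src r) u.
Proof. intros Hr Hu. apply In_cyc in Hu; [|apply Hr]. destruct Hu as [t ->]. apply cyc_conn; auto. Qed.
Lemma link_conn r1 r2 : clos_refl_trans _ link r1 r2 -> clos_refl_trans _ Erel (src r1) (src r2).
Proof. intro H. induction H.
  - destruct H as [Hx [Hy [v [V1 V2]]]]. apply rt_trans with v. apply cyc_conn2; auto.
    apply crt_sym. apply Erel_sym. apply cyc_conn2; auto.
  - apply rt_refl.
  - eapply rt_trans; eauto. Qed.
Lemma last_app_cons {A} (l1 l2 : list A) u x : last (l1 ++ u :: l2) x = last (u :: l2) x.
Proof. induction l1 as [|a l1 IH]; auto. rewrite <- IH. destruct l1; reflexivity. Qed.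
Lemma crt_path {A} (R : A -> A -> Prop) u v : clos_refl_trans _ R u v ->
  exists ws, NoDup (u :: ws) /\ chain R (u :: ws) /\ last (u :: ws) u = v.
Proof. intro H. apply clos_rt_rt1n in H. induction H.
  - exists []; repeat split; simpl; auto. constructor; auto; constructor.
  - destruct IHclos_refl_trans_1n as [ws [H1 [H2 H3]]].
    destruct (classic (In x (y :: ws))) as [Hin|Hin].
    + apply in_split in Hin. destruct Hin as [l1 [l2 E]]. exists l2. rewrite E in H1, H2, H3. split; [|split].
      * apply NoDup_app_remove_l in H1; auto.
      * apply chain_app in H2; tauto.
      * rewrite last_app_cons in H3. rewrite (last_irr x l2 x y). auto.
    + exists (y :: ws). split; [|split].
      * constructor; auto.
      * split; auto.
      * change (last (y :: ws) x = z). rewrite (last_irr y ws x y); auto. Qed.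

Lemma union_vertex_iff u : union_vertex Cs u <-> exists r, isrep r /\ In u (cyc r).
Proof. unfold union_vertex. split.
  - intros [C [HC Hu]]. apply In_Cs in HC. destruct HC as [r [Hr ->]]. eauto.
  - intros [r [Hr Hu]]. exists (cyc r); split; auto. apply In_Cs; eauto. Qed.
Lemma prop_i : union_connected Cs.
Proof. intros u v Hu Hv. apply union_vertex_iff in Hu, Hv. destruct Hu as [r1 [H1 U1]], Hv as [r2 [H2 V2]].
  destruct (owner_ex origin C0_origin) as [r0 O0].
  apply crt_path. apply rt_trans with (src r1). apply crt_sym. apply Erel_sym. apply cyc_conn2; auto.
  apply rt_trans with (src r0). apply crt_sym. apply Erel_sym. apply link_conn. apply all_linked; auto.
  apply rt_trans with (src r2). apply link_conn. apply all_linked; auto. apply cyc_conn2; auto. Qed.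

Definition Rd (x y : dart) := tgt x = src y.
Definition closedc (l : list dart) := match l with [] => True | x :: _ => chain Rd (l ++ [x]) end.
Lemma chain_snoc_change l y y' : chain Rd (l ++ [y]) -> src y = src y' -> chain Rd (l ++ [y']).
Proof. induction l as [|a l IH]; intros H E; [simpl; auto|]. destruct l as [|b l].
  - simpl in *. destruct H; split; auto. unfold Rd in *; congruence.
  - change (Rd a b /\ chain Rd ((b :: l) ++ [y'])). change (Rd a b /\ chain Rd ((b :: l) ++ [y])) in H.
    destruct H; split; auto. Qed.
Lemma closedc_rot A B : A <> [] -> B <> [] -> closedc (A ++ B) -> closedc (B ++ A).
Proof. destruct A as [|a A], B as [|b B]; try congruence. intros _ _. simpl.
  intro H. rewrite <- app_assoc in H. simpl in H. change (chain Rd ((a :: A) ++ b :: B ++ [a])) in H.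
  apply chain_app in H. destruct H as [H1 H2].
  rewrite <- app_assoc. simpl. change (chain Rd ((b :: B) ++ a :: A ++ [b])). apply chain_app. split; auto. Qed.
Lemma closedc_glue o O t T : closedc (o :: O) -> closedc (t :: T) -> src o = src t -> closedc ((o :: O) ++ t :: T).
Proof. simpl. intros H1 H2 E. rewrite <- app_assoc. simpl. change (chain Rd ((o :: O) ++ t :: T ++ [o])).
  apply chain_app. split.
  - apply (chain_snoc_change (o :: O) o t); auto.
  - change (chain Rd ((t :: T) ++ [o])). apply (chain_snoc_change (t :: T) t o); auto. Qed.
Lemma chain_map_seq (f : nat -> dart) a n : (forall i, Rd (f i) (f (S i))) -> chain Rd (map f (seq a n)).
Proof. intro H. revert a; induction n; intros a; simpl; auto. destruct n; simpl; auto. split; auto.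
  specialize (IHn (S a)); simpl in IHn; auto. Qed.
Definition orb (d : dart) : list dart := map (fun i => it i d) (seq 0 (per d)).
Lemma orb_closed d : inD d -> closedc (orb d).
Proof. intro HD. unfold orb. pose proof (per_pos d). destruct (per d) as [|p] eqn:E; [lia|].
  change (chain Rd (map (fun i => it i d) (seq 0 (S p)) ++ [it 0 d])).
  replace (it 0 d) with (it (0 + S p) d) by (simpl plus; rewrite <- E, it_per; auto).
  change [it (0 + S p) d] with (map (fun i => it i d) [(0 + S p)%nat]).
  rewrite <- map_app, <- seq_S. apply chain_map_seq. intro i; unfold Rd; rewrite <- src_it_S; auto. Qed.
Lemma orb_nodup d : inD d -> NoDup (orb d).
Proof. intro HD. apply (NoDup_nth (orb d) d). unfold orb; rewrite length_map, length_seq. intros i j Hi Hj E.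
  rewrite !nth_map_seq in E by auto. apply it_distinct in E; auto. Qed.
Lemma In_orb d x : inD d -> (In x (orb d) <-> exists n, x = it n d).
Proof. intro HD. unfold orb. rewrite in_map_iff. split.
  - intros [n [<- _]]; eauto.
  - intros [n ->]. exists (n mod per d)%nat. split. symmetry; apply it_mod; auto.
    apply in_seq. split; [lia|]. simpl. apply Nat.mod_upper_bound. pose proof (per_pos d); lia. Qed.

Definition Inv (r0 : dart) (T : list dart) := T <> [] /\ closedc T /\ NoDup T /\ (forall x, In x T -> inD x) /\
  (forall x, In x T -> In (succ x) T) /\ In r0 T.
Lemma Inv_it r0 T x n : Inv r0 T -> In x T -> In (it n x) T.
Proof. intros HI Hx. induction n; auto. rewrite it_S. apply HI; auto. Qed.
Lemma Inv_orb r0 : inD r0 -> Inv r0 (orb r0).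
Proof. intro HD. split; [|split; [apply orb_closed; auto|split; [apply orb_nodup; auto|split; [|split]]]].
  - unfold orb. pose proof (per_pos r0). destruct (per r0); simpl; [lia|congruence].
  - intros x Hx. apply In_orb in Hx; auto. destruct Hx as [n ->]. apply it_D; auto.
  - intros x Hx. apply In_orb in Hx; auto. destruct Hx as [n ->]. apply In_orb; auto. exists (S n); auto.
  - apply In_orb; auto. exists O; auto. Qed.
Lemma crt_cross {A} (R : A -> A -> Prop) (P : A -> Prop) x y : clos_refl_trans _ R x y -> P x -> ~ P y ->
  exists a b, R a b /\ P a /\ ~ P b.
Proof. intro H. induction H; intros Hx Hy.
  - eauto.
  - contradiction.
  - destruct (classic (P y)); eauto. Qed.
Lemma filter_lt {A} (p q : A -> bool) (l : list A) a : (forall x, p x = true -> q x = true) -> In a l -> q a = true -> p a = false ->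
  (length (filter p l) < length (filter q l))%nat.
Proof. intros Hpq. induction l as [|b l IH]; simpl; [tauto|]. intros [<-|Ha] Hq Hp.
  - rewrite Hq, Hp. simpl. assert (forall l', (length (filter p l') <= length (filter q l'))%nat).
    { induction l' as [|z l' IHl']; simpl; auto. destruct (p z) eqn:E; [rewrite (Hpq _ E); simpl; lia|]. destruct (q z); simpl; lia. }
    specialize (H l); lia.
  - specialize (IH Ha Hq Hp). destruct (p b) eqn:E; [rewrite (Hpq _ E); simpl; lia|]. destruct (q b); simpl; lia. Qed.

Definition meas (T : list dart) : nat := length (filter (fun r => negb (dec (In r T))) Rl).
Lemma orb_cons d : exists O', orb d = d :: O'.
Proof. unfold orb. pose proof (per_pos d). destruct (per d); [lia|]. simpl. eauto. Qed.
Lemma splice_step r0 T : owns r0 origin -> Inv r0 T -> (exists r, isrep r /\ ~ In r T) ->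
  exists T', Inv r0 T' /\ (meas T' < meas T)%nat.
Proof. intros Ho HI [r [Hr HrT]].
  destruct HI as [HI1 [HI2 [HI3 [HI4 [HI5 HI6]]]]].
  destruct (crt_cross link (fun x => In x T) r0 r (all_linked r0 Ho r Hr) HI6 HrT) as [a [b [[Ha [Hb [v [Va Vb]]]] [HaT HbT]]]].
  apply In_cyc in Va; [|apply Ha]. apply In_cyc in Vb; [|apply Hb]. destruct Va as [n1 E1], Vb as [n2 E2].
  set (t := it n1 a). set (dl := it n2 b).
  assert (HIn : Inv r0 T). { unfold Inv. split; [exact HI1|]. split; [exact HI2|]. split; [exact HI3|]. split; [exact HI4|]. split; [exact HI5|exact HI6]. }
  assert (HtT : In t T) by (apply (Inv_it r0); auto).
  assert (Ddl : inD dl) by (apply it_D, Hb).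
  destruct (orb_cons dl) as [O' EO].
  apply in_split in HtT. destruct HtT as [A [B ET]].
  assert (Hperm : Permutation T (t :: B ++ A)).
  { rewrite ET. change (t :: B ++ A) with ((t :: B) ++ A). apply Permutation_app_comm. }
  assert (HinT : forall x, In x (t :: B ++ A) <-> In x T).
  { intro x; split; apply Permutation_in; auto. symmetry; auto. }
  assert (Hdisj : forall x, In x (orb dl) -> ~ In x T).
  { intros x Hx HxT. apply In_orb in Hx; auto. destruct Hx as [k ->]. unfold dl in HxT. rewrite it_it in HxT.
    apply HbT. rewrite <- (orbit_back b (k + n2)) by apply Hb. apply (Inv_it r0); auto. }
  exists (orb dl ++ t :: B ++ A). split; [|].
  - split; [|split; [|split; [|split; [|split]]]].
    + rewrite EO; simpl; congruence.
    + rewrite EO. apply closedc_glue. rewrite <- EO; apply orb_closed; auto.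
      destruct A as [|a0 A]. { rewrite app_nil_r. rewrite ET in HI2. rewrite app_nil_l in HI2. auto. }
      change (t :: B ++ a0 :: A) with ((t :: B) ++ a0 :: A). apply closedc_rot; try congruence.
      unfold dl, t. rewrite <- E1, <- E2. auto.
    + apply NoDup_app. apply orb_nodup; auto. apply (Permutation_NoDup Hperm); auto.
      intros x Hx1 Hx2. apply (Hdisj x Hx1). apply HinT; auto.
    + intros x Hx. apply in_app_or in Hx. destruct Hx as [Hx|Hx].
      * apply In_orb in Hx; auto. destruct Hx as [k ->]. apply it_D; auto.
      * apply HI4, HinT; auto.
    + intros x Hx. apply in_or_app. apply in_app_or in Hx. destruct Hx as [Hx|Hx].
      * left. apply In_orb in Hx; auto. destruct Hx as [k ->]. apply In_orb; auto. exists (S k); auto.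
      * right. apply HinT. apply HI5. apply HinT; auto.
    + apply in_or_app; right. apply HinT; auto.
  - unfold meas. apply (filter_lt _ _ Rl b).
    + intros x Hx. apply negb_true_iff in Hx. apply negb_true_iff. apply decF. apply decF in Hx.
      intro Q; apply Hx. apply in_or_app; right. apply HinT; auto.
    + apply In_Rl; auto.
    + apply negb_true_iff, decF; auto.
    + apply negb_false_iff, decP. apply in_or_app; left. apply In_orb; auto.
      exists (n2 * (per b - 1))%nat. unfold dl. rewrite orbit_back; auto. apply Hb.
Qed.
Lemma circuit_trail r0 : owns r0 origin -> exists T, Inv r0 T /\ forall r, isrep r -> In r T.
Proof. intro Ho. assert (A : forall n T, meas T = n -> Inv r0 T -> exists T', Inv r0 T' /\ forall r, isrep r -> In r T').
  { intro n. induction n as [n IH] using (well_founded_induction lt_wf). intros T Hn HI.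
    destruct (classic (exists r, isrep r /\ ~ In r T)) as [E|E].
    - destruct (splice_step r0 T Ho HI E) as [T' [H1 H2]]. apply (IH (meas T')) with (T := T'); auto. lia.
    - exists T; split; auto. intros r Hr. apply NNPP; intro Q; apply E; eauto. }
  apply (A _ (orb r0) eq_refl). apply Inv_orb. apply Ho. Qed.
Lemma ed_GC d : inD d -> GC_edge occ (ed d).
Proof. intro HD. apply GC_iff. destruct (lsq_rsq_AB d) as [[<- _]|[<- _]]; [left|right]; apply HD. Qed.
Lemma closed_nth T dd : closedc T -> forall i, (i < length T)%nat ->
  tgt (nth i T dd) = src (nth ((S i) mod length T) T dd).
Proof. intros HC i Hi. destruct T as [|x T0]; [simpl in Hi; lia|]. unfold closedc in HC.
  pose proof (chain_nth Rd _ dd HC i) as Q. rewrite length_app in Q. simpl length in Q.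
  specialize (Q ltac:(simpl in *; lia)). unfold Rd in Q.
  rewrite app_nth1 in Q by auto. rewrite Q. destruct (Nat.eq_dec (S i) (length (x :: T0))) as [E|E].
  - rewrite app_nth2 by lia. rewrite E, Nat.sub_diag, Nat.Div0.mod_same. reflexivity.
  - rewrite app_nth1 by lia. rewrite Nat.mod_small by lia. reflexivity. Qed.
Lemma NoDup_map_on {A B} (f : A -> B) l : (forall x y, In x l -> In y l -> f x = f y -> x = y) -> NoDup l -> NoDup (map f l).
Proof. induction l as [|a l IH]; simpl; intros H1 H2; constructor.
  - intro Q. apply in_map_iff in Q. destruct Q as [y [E Hy]]. inversion H2 as [|a' l' H3 H4 H5]; subst.
    assert (y = a) by (apply H1; auto). subst; contradiction.
  - apply IH; auto. inversion H2; auto. Qed.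
Lemma circuit_ok r0 T : Inv r0 T -> (forall r, isrep r -> In r T) ->
  is_circuit occ (map src T) (map ed T) /\ forall e, union_edge Cs e -> In e (map ed T).
Proof. intros HI Hall. destruct HI as [HI1 [HI2 [HI3 [HI4 [HI5 HI6]]]]]. split.
  - split; [destruct T; simpl; congruence|]. split; [rewrite !length_map; auto|]. split.
    + apply NoDup_map_on; auto. intros x y Hx Hy E. apply inD_ed_inj; auto.
    + intros i Hi. rewrite length_map in Hi. set (dd := (origin, DE)).
      assert (Hm : forall {B} (f : dart -> B) j x, (j < length T)%nat -> nth j (map f T) x = f (nth j T dd)).
      { intros B f j x Hj. rewrite nth_indep with (d' := f dd) by (rewrite length_map; auto). apply map_nth. }
      rewrite !Hm by auto. split.
      * apply ed_GC, HI4, nth_In; auto.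
      * unfold nxt. rewrite length_map. rewrite Hm. rewrite <- closed_nth; auto. apply ed_joins.
        apply Nat.mod_upper_bound; lia.
  - intros e He. apply union_iff in He. destruct He as [d [HD <-]]. destruct (orbit_rep d HD) as [r [Hr [n ->]]].
    apply in_map. assert (Q : Inv r0 T) by (split; [|split; [|split; [|split; [|split]]]]; auto). apply (Inv_it r0 T r n Q). auto. Qed.

Lemma opp_opp o : opp (opp o) = o. Proof. destruct o; auto. Qed.
Lemma dart_src d w : src d = w -> d = (w, snd d).
Proof. destruct d; unfold src; simpl; intros ->; auto. Qed.
Lemma bdl_of_bdD w b : bdD (ed (w,b)) -> bdl (locw w) b = true.
Proof. intros [d [HD E]]. apply bdl_iff. symmetry in E. destruct (ed_eq _ _ E) as [Q|Q].
  - left. rewrite <- Q in HD. apply HD.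
  - right. assert (Q' : d = drev (w,b)) by (rewrite Q, rev_rev; auto). rewrite Q' in HD.
    destruct HD as [H1 H2]. rewrite lsq_rev in H1; rewrite rsq_rev in H2; auto. Qed.

Lemma LU_apply g L w d0 d1 :
  gcw g L -> closedw g L -> (2 <= L)%nat -> g O = w -> (forall t, (0 < t < L)%nat -> g t <> w) ->
  src d1 = g O -> tgt d1 = g 1%nat -> src d0 = g (L-1)%nat -> tgt d0 = g L ->
  bdD (ed d0) -> bdD (ed d1) -> ed d0 <> ed d1 ->
  (inD d0 -> d1 = succ d0) /\ (inD (drev d1) -> drev d0 = succ (drev d1)).
Proof. intros Hg Hc HL H0 Hn S1 T1 S0 T0 B0 B1 Hne.
  assert (Tw : tgt d0 = w) by (rewrite T0, Hc; auto).
  set (a := snd d0). set (b := snd d1). set (l := locw w).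
  assert (E0 : d0 = drev (w, opp a)) by (rewrite <- Tw; apply tgt_in; auto).
  assert (E1 : d1 = (w, b)) by (apply dart_src; rewrite S1; auto).
  assert (Hfl : forall o, flw g L w o = flU a b o).
  { intro o. unfold flw, flU.
    assert (HLw : g L = w) by (unfold closedw in Hc; rewrite Hc; auto).
    assert (Hend : w = fst (ends (ed (w,o))) \/ w = snd (ends (ed (w,o)))).
    { unfold ed; destruct o; simpl; [left|left|right|right]; try reflexivity; apply injective_projections; simpl; lia. }
    rewrite (ec_w_once g L w _ HL H0 HLw Hn Hend).
    rewrite <- S1, <- T1, <- S0, <- T0. rewrite (b2_dir w o d1 b) by auto. rewrite (b2_dir w o d0 (opp a)) by auto.
    rewrite odd_b2. destruct (dir_eqb o b), (dir_eqb o (opp a)); reflexivity. }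
  destruct (local_ok g L w Hg Hc) as [K1 K2]. fold l in K2.
  assert (V : validl l = true) by apply validw.
  assert (Nab : dir_eqb b (opp a) = false).
  { destruct (dir_eqb_spec b (opp a)) as [E|E]; auto. exfalso. apply Hne. rewrite E0, E1, ed_rev, E; auto. }
  split; intro HD.
  - assert (Ia : inDl l a = true) by (unfold l; rewrite <- Tw; apply inDl_iff; auto).
    assert (Bb : bdl l b = true) by (apply bdl_of_bdD; rewrite <- E1; auto).
    pose proof (LU l a b (par g L (sNE w))) as Q.
    rewrite <- (consis_ext _ _ _ Hfl), <- (sook_ext _ _ _ _ Hfl), K1, K2, V, Ia, Bb, Nab in Q.
    specialize (Q eq_refl). rewrite E1, succ_loc, Tw, Q. auto.
  - assert (Ib : inDl l (opp b) = true).
    { unfold l. assert (Q : tgt (drev d1) = w) by (rewrite tgt_rev, S1; auto).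
      replace (opp b) with (snd (drev d1)) by (unfold drev; auto). rewrite <- Q. apply inDl_iff; auto. }
    assert (Ba : bdl l (opp a) = true).
    { apply bdl_of_bdD. replace (ed (w, opp a)) with (ed d0); auto. rewrite E0, ed_rev; auto. }
    assert (Nab' : dir_eqb (opp a) (opp (opp b)) = false).
    { rewrite opp_opp. destruct (dir_eqb_spec (opp a) b) as [E|E]; auto. exfalso. apply Hne.
      rewrite E0, E1, ed_rev, <- E; auto. }
    assert (Hfl' : forall o, flw g L w o = flU (opp b) (opp a) o).
    { intro o. rewrite Hfl. unfold flU. rewrite opp_opp. destruct (dir_eqb o (opp a)), (dir_eqb o b); auto. }
    pose proof (LU l (opp b) (opp a) (par g L (sNE w))) as Q.
    rewrite <- (consis_ext _ _ _ Hfl'), <- (sook_ext _ _ _ _ Hfl'), K1, K2, V, Ib, Ba, Nab' in Q.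
    specialize (Q eq_refl). rewrite succ_loc, tgt_rev, S1, H0.
    replace (snd (drev d1)) with (opp b) by (unfold drev; auto). fold l. rewrite <- Q.
    rewrite E0, rev_rev; auto.
Qed.

Definition dir_of (u v : pt) : dir :=
  if Z.eqb (fst v) (fst u + 1) then DE else if Z.eqb (snd v) (snd u + 1) then DN
  else if Z.eqb (fst v) (fst u - 1) then DW else DS.
Lemma dir_of_ok u v : adj u v -> tgt (u, dir_of u v) = v.
Proof. intro H. destruct (adj_dart u v H) as [[[x y] o] [<- <-]]. unfold dir_of, src, tgt; destruct o; simpl;
  zcase; try (f_equal; lia); exfalso; lia. Qed.
Lemma gC_mod C t : gC C t = gC C (t mod length C).
Proof. unfold gC. rewrite Nat.Div0.mod_mod; auto. Qed.
Lemma gC_S_mod C t : gC C (S t) = gC C (S (t mod length C)).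
Proof. unfold gC. f_equal. replace (S t) with (t + 1)%nat by lia. replace (S (t mod length C)) with (t mod length C + 1)%nat by lia.
  rewrite Nat.Div0.add_mod_idemp_l; auto. Qed.
Lemma gcw_all C : cycGC C -> forall t, exists e, GC_edge occ e /\ joins e (gC C t) (gC C (S t)).
Proof. intros [H0 H] t. rewrite gC_mod, gC_S_mod. apply H. apply Nat.mod_upper_bound; lia. Qed.
Lemma gC_inj C a b : NoDup C -> (0 < length C)%nat -> gC C a = gC C b -> (a mod length C = b mod length C)%nat.
Proof. intros Hn H0 E. unfold gC in E. apply (NoDup_nth C origin) in E; auto; apply Nat.mod_upper_bound; lia. Qed.
Lemma mod_shift_neq r t m : (r < m)%nat -> (0 < t < m)%nat -> ((r + t) mod m <> r)%nat.
Proof. intros H1 H2. destruct (lt_dec (r + t) m).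
  - rewrite Nat.mod_small; lia.
  - replace (r + t)%nat with ((r + t - m) + 1 * m)%nat by lia. rewrite Nat.Div0.mod_add. rewrite Nat.mod_small; lia. Qed.
Lemma mod_shift_neq' a t m : (0 < t < m)%nat -> ((a + t) mod m <> a mod m)%nat.
Proof. intros H. rewrite <- Nat.Div0.add_mod_idemp_l. apply mod_shift_neq; auto. apply Nat.mod_upper_bound; lia. Qed.

Definition dk (C : list pt) (k : nat) : dart := (gC C k, dir_of (gC C k) (gC C (S k))).
Lemma dk_tgt C k : cycGC C -> tgt (dk C k) = gC C (S k).
Proof. intro HC. destruct (gcw_all C HC k) as [e [_ He]]. apply dir_of_ok. exists e; auto. Qed.
Lemma dk_per C k : (0 < length C)%nat -> dk C (k + length C) = dk C k.
Proof. intro H. unfold dk. rewrite gC_per by auto. replace (S (k + length C)) with (S k + length C)%nat by lia.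
  rewrite gC_per; auto. Qed.
Lemma dk_edge C k : cycGC C -> cycle_edge C (ed (dk C k)).
Proof. intro HC. apply cycle_edge_iff. exists (k mod length C)%nat. split. apply Nat.mod_upper_bound; destruct HC; lia.
  rewrite <- gC_mod, <- gC_S_mod. rewrite <- (dk_tgt C k HC). change (gC C k) with (src (dk C k)).
  apply joinsb_dart; reflexivity. Qed.
Lemma dk_mod C k : dk C k = dk C (k mod length C).
Proof. unfold dk. rewrite <- gC_mod, <- gC_S_mod; auto. Qed.
Lemma ce_dk C e : cycGC C -> cycle_edge C e -> exists k, e = ed (dk C k).
Proof. intros HC He. apply cycle_edge_iff in He. destruct He as [k [_ Hk]]. exists k.
  rewrite <- (dk_tgt C k HC) in Hk. change (gC C k) with (src (dk C k)) in Hk. apply joinsb_dart in Hk; auto. Qed.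

Lemma cyc_step C k : is_cycle occ C -> (forall e, cycle_edge C e -> bdD e) ->
  (inD (dk C k) -> dk C (S k) = succ (dk C k)) /\ (inD (drev (dk C (S k))) -> drev (dk C k) = succ (drev (dk C (S k)))).
Proof. intros HCy Hb. pose proof (is_cycle_GC C HCy) as HC. destruct HCy as [Hm [Hnd _]].
  set (m := length C) in *. set (g := fun t => gC C (S k + t)).
  apply (LU_apply g m (gC C (S k))).
  - intros t Ht. unfold g. replace (S k + S t)%nat with (S (S k + t)) by lia. apply gcw_all; auto.
  - unfold closedw, g. rewrite Nat.add_0_r. apply gC_per; lia.
  - lia.
  - unfold g; rewrite Nat.add_0_r; auto.
  - intros t Ht E. unfold g in E. apply gC_inj in E; auto; try lia.
    apply (mod_shift_neq' (S k) t m); auto.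
  - unfold g; simpl; rewrite Nat.add_0_r; auto.
  - unfold g. rewrite dk_tgt by auto. f_equal; lia.
  - unfold g, dk; simpl. replace (S (k + (m - 1))) with (k + m)%nat by lia. rewrite gC_per; auto; lia.
  - unfold g. rewrite dk_tgt by auto. replace (S k + m)%nat with (S k + m)%nat by lia. rewrite gC_per; auto; lia.
  - apply Hb, dk_edge; auto.
  - apply Hb, dk_edge; auto.
  - intro E. destruct (ed_eq _ _ E) as [Q|Q].
    + apply (f_equal src) in Q. unfold dk, src in Q; simpl in Q. apply gC_inj in Q; auto; try lia.
      replace (S k) with (k + 1)%nat in Q by lia. symmetry in Q. apply (mod_shift_neq' k 1 m); auto; lia.
    + apply (f_equal src) in Q. rewrite src_rev, dk_tgt in Q by auto. unfold dk, src in Q; simpl in Q.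
      apply gC_inj in Q; auto; try lia. replace (S (S k)) with (k + 2)%nat in Q by lia. symmetry in Q.
      apply (mod_shift_neq' k 2 m); auto; lia.
Qed.

Lemma it_period d m t : (0 < m)%nat -> it m d = d -> it t d = it (t mod m) d.
Proof. intros H0 H. assert (A : forall q, it (q * m) d = d).
  { induction q; auto. change (it (m + q * m) d = d). rewrite it_add, IHq; auto. }
  rewrite (Nat.div_mod t m) at 1 by lia. rewrite Nat.add_comm, it_add, Nat.mul_comm, A; auto. Qed.

Lemma cyc_orbit C : is_cycle occ C -> (forall e, cycle_edge C e -> bdD e) ->
  exists d, inD d /\ forall e, cycle_edge C e <-> cycle_edge (cyc d) e.
Proof. intros HCy Hb. pose proof (is_cycle_GC C HCy) as HC. pose proof HCy as [Hm _].
  set (m := length C) in *.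
  destruct (Hb _ (dk_edge C 0 HC)) as [d' [Hd' Ed']].
  destruct (classic (inD (dk C 0))) as [H0|H0].
  - assert (A : forall k, inD (dk C k) /\ dk C k = it k (dk C 0)).
    { induction k; [split; auto|]. destruct IHk as [I1 I2]. rewrite (proj1 (cyc_step C k HCy Hb) I1).
      split. apply succ_D; auto. rewrite I2; auto. }
    exists (dk C 0); split; auto. intro e. split.
    + intro He. destruct (ce_dk C e HC He) as [k ->]. rewrite (proj2 (A k)). apply cyc_edge_of; auto.
    + intro He. apply cyc_edge_dart in He; auto. destruct He as [t ->]. rewrite <- (proj2 (A t)). apply dk_edge; auto.
  - assert (Hr : inD (drev (dk C 0))).
    { symmetry in Ed'. destruct (ed_eq _ _ Ed') as [Q|Q]; [rewrite Q in H0; contradiction|].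
      rewrite Q, rev_rev; auto. }
    set (r := drev (dk C m)).
    assert (Er : r = drev (dk C 0)) by (unfold r; rewrite <- (dk_per C 0) by lia; auto).
    assert (A : forall n, (n <= m)%nat -> inD (drev (dk C (m - n))) /\ drev (dk C (m - n)) = it n r).
    { induction n; intros Hn. rewrite Nat.sub_0_r. split; [change (inD r); rewrite Er; auto | auto].
      destruct (IHn ltac:(lia)) as [I1 I2]. replace (m - n)%nat with (S (m - S n)) in I1, I2 by lia.
      rewrite (proj2 (cyc_step C (m - S n) HCy Hb) I1). split. apply succ_D; auto. rewrite I2; auto. }
    assert (Hrm : it m r = r). { rewrite <- (proj2 (A m ltac:(lia))). rewrite Nat.sub_diag; auto. }
    exists r; split; [rewrite Er; auto|]. intro e. split.
    + intro He. destruct (ce_dk C e HC He) as [k ->]. rewrite dk_mod. fold m.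
      assert (Hk : (k mod m < m)%nat) by (apply Nat.mod_upper_bound; lia).
      rewrite <- ed_rev. replace (k mod m)%nat with (m - (m - k mod m))%nat by lia.
      rewrite (proj2 (A (m - k mod m)%nat ltac:(lia))). apply cyc_edge_of. rewrite Er; auto.
    + intro He. apply cyc_edge_dart in He; [|rewrite Er; auto]. destruct He as [t ->].
      rewrite (it_period r m t) by (auto; lia).
      assert (Ht : (t mod m < m)%nat) by (apply Nat.mod_upper_bound; lia).
      rewrite <- (proj2 (A (t mod m)%nat ltac:(lia))). rewrite ed_rev. apply dk_edge; auto.
Qed.

Lemma prop_unique Cs' : good_family occ Cs' -> same_family Cs Cs'.
Proof. intros [Hcyc [Hunion _]].
  assert (Hc' : forall C', In C' Cs' -> exists d, inD d /\ forall e, cycle_edge C' e <-> cycle_edge (cyc d) e).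
  { intros C' HC'. apply cyc_orbit; auto. intros e He. apply outer_iff, Hunion. exists C'; auto. }
  split.
  - intros C HC. apply In_Cs in HC. destruct HC as [r [Hr ->]].
    assert (He : union_edge Cs' (ed r)). { apply Hunion, outer_iff. exists r; split; auto. apply Hr. }
    destruct He as [C' [HC' He]]. destruct (Hc' C' HC') as [d [HD Hd]]. exists C'. split; auto.
    apply Hd in He. apply cyc_edge_dart in He; auto. destruct He as [t Et].
    apply inD_ed_inj in Et; [|apply Hr|apply it_D; auto]. subst r.
    intro e. rewrite Hd, cyc_edge_it; auto. tauto.
  - intros C' HC'. destruct (Hc' C' HC') as [d [HD Hd]]. destruct (orbit_rep d HD) as [r [Hr [n ->]]].
    exists (cyc r). split. apply In_Cs; eauto. intro e. rewrite Hd, cyc_edge_it; [tauto|apply Hr]. Qed.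

Lemma main_result : exists Cs0 : list (list pt),
    good_family occ Cs0 /\
    (forall Cs', good_family occ Cs' -> same_family Cs0 Cs') /\
    (exists ws es, is_circuit occ ws es /\ forall e, union_edge Cs0 e -> In e es).
Proof. exists Cs. split; [|split].
  - split; [|split; [|split; [|split; [|split]]]].
    + intros C HC. apply In_Cs in HC. destruct HC as [r [Hr ->]]. apply cyc_is_cycle, Hr.
    + intro e. rewrite union_iff, outer_iff. tauto.
    + apply prop_i.
    + intros i j Hi Hj Hij. set (dd := (origin, DE)).
      unfold Cs in *. rewrite length_map in Hi, Hj.
      rewrite !nth_indep with (d := []) (d' := cyc dd) by (rewrite length_map; auto).
      rewrite !map_nth.
      assert (Ri : isrep (nth i Rl dd)) by (apply In_Rl, nth_In; auto).
      assert (Rj : isrep (nth j Rl dd)) by (apply In_Rl, nth_In; auto).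
      assert (Nij : nth i Rl dd <> nth j Rl dd).
      { intro E. apply Hij. apply (NoDup_nth Rl dd); auto. apply NoDup_Rl. }
      split.
      * intro x. apply prop_ii_a; auto.
      * intros u v U1 U2 V1 V2. apply (prop_ii_b (nth i Rl dd) (nth j Rl dd)); auto.
    + apply prop_iii.
    + apply prop_iv.
  - apply prop_unique.
  - destruct (owner_ex origin C0_origin) as [r0 Ho]. destruct (circuit_trail r0 Ho) as [T [HI Hall]].
    exists (map src T), (map ed T). apply (circuit_ok r0); auto. Qed.

End Main.

Theorem theorem1 (occ : Defs.pt -> Prop) :
  occ Defs.origin ->
  Defs.finite_set (Defs.C0 occ) ->
  exists Cs : list (list Defs.pt),
    Defs.good_family occ Cs /\
    (forall Cs', Defs.good_family occ Cs' -> Defs.same_family Cs Cs') /\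
    (exists ws es, Defs.is_circuit occ ws es /\
       forall e, Defs.union_edge Cs e -> In e es).
Proof. intros H1 H2. exact (main_result occ H1 H2). Qed.
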